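(* Let $E$ be a locally complete lcHs, $G\subset E'$ a linear subspace that determines boundedness, $\Omega\subset\mathbb{R}^d$ open, $k\in\mathbb{N}_0$ and $0<\gamma\le1$. (a) If $f\colon\Omega\to E$ is such that $e'\circ f\in\mathcal{C}^{k,\gamma}_{loc}(\Omega)$ for all $e'\in G$, then $f\in\mathcal{C}^{k,\gamma}_{loc}(\Omega,E)$. (b) If $f\colon\Omega\to E$ is such that $e'\circ f\in\mathcal{C}^{k+1}(\Omega)$ for all $e'\in G$, then $f\in\mathcal{C}^{k,1}_{loc}(\Omega,E)$.
   Context: $\mathbb{K}\in\{\mathbb{R},\mathbb{C}\}$; ''lcHs'' means locally convex Hausdorff space over $\mathbb{K}$ with directed fundamental system of seminorms $(p_\alpha)_{\alpha\in\mathfrak{A}}$. $E$ is locally complete if for every closed bounded absolutely convex $D\subset E$ the space $\bigcup_n nD$ normed by the gauge of $D$ is Banach. $G\subset E'$ determines boundedness if every $\sigma(E,G)$-bounded subset of $E$ is bounded in $E$. $\mathcal{C}^k(\Omega,E)$ denotes $k$-times continuously partially differentiable functions (partial derivatives $(\partial^\beta)^E$ as limits of difference quotients in $E$). $\mathcal{C}^{k,\gamma}_{loc}(\Omega,E)$ is the space of $f\in\mathcal{C}^k(\Omega,E)$ such that for every compact $K\subset\Omega$ and $\alpha\in\mathfrak{A}$: $\sup_{x\in K,|\beta|\le k}p_\alpha((\partial^\beta)^Ef(x))<\infty$ and $\sup_{|\beta|=k}\sup_{x\ne y\in K}\frac{p_\alpha((\partial^\beta)^Ef(x)-(\partial^\beta)^Ef(y))}{|x-y|^\gamma}<\infty$.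 For $E=\mathbb{K}$ the $E$ is omitted. *)

(* Defs.v *)
From Stdlib Require Import Reals Lra List.
Open Scope R_scope.

Inductive Kind := KReal | KCplx.

Definition Kt (k : Kind) : Type :=
  match k with KReal => R | KCplx => (R * R)%type end.

Definition Kadd {k : Kind} : Kt k -> Kt k -> Kt k :=
  match k with
  | KReal => fun a b => a + b
  | KCplx => fun a b => (fst a + fst b, snd a + snd b)
  end.

Definition Kmul {k : Kind} : Kt k -> Kt k -> Kt k :=
  match k with
  | KReal => fun a b => a * b
  | KCplx => fun a b => (fst a * fst b - snd a * snd b,
                         fst a * snd b + snd a * fst b)
  end.

Definition Kopp {k : Kind} : Kt k -> Kt k :=
  match k with
  | KReal => fun a => - a
  | KCplx => fun a => (- fst a, - snd a)
  end.

Definition Kabs {k : Kind} : Kt k -> R :=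
  match k with
  | KReal => fun a => Rabs a
  | KCplx => fun a => sqrt (fst a * fst a + snd a * snd a)
  end.

Definition Kinj {k : Kind} : R -> Kt k :=
  match k with
  | KReal => fun r => r
  | KCplx => fun r => (r, 0)
  end.

Record LCS (k : Kind) := {
  car :> Type;
  vzero : car;
  vadd : car -> car -> car;
  vopp : car -> car;
  vscal : Kt k -> car -> car;
  idx : Type;
  sn : idx -> car -> R
}.
Arguments vzero {k} _.
Arguments vadd {k} _ _ _.
Arguments vopp {k} _ _.
Arguments vscal {k} _ _ _.
Arguments idx {k} _.
Arguments sn {k} _ _ _.

Definition vsub {k} (E : LCS k) (x y : E) : E := vadd E x (vopp E y).

(* E is a locally convex Hausdorff space over K whose topology is given by the
   directed fundamental system of seminorms (sn E a)_{a : idx E}. *)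
Definition lcHs {k : Kind} (E : LCS k) : Prop :=
  (forall x y z : E, vadd E x (vadd E y z) = vadd E (vadd E x y) z) /\
  (forall x y : E, vadd E x y = vadd E y x) /\
  (forall x : E, vadd E x (vzero E) = x) /\
  (forall x : E, vadd E x (vopp E x) = vzero E) /\
  (forall (c : Kt k) (x y : E), vscal E c (vadd E x y) = vadd E (vscal E c x) (vscal E c y)) /\
  (forall (c d : Kt k) (x : E), vscal E (Kadd c d) x = vadd E (vscal E c x) (vscal E d x)) /\
  (forall (c d : Kt k) (x : E), vscal E (Kmul c d) x = vscal E c (vscal E d x)) /\
  (forall x : E, vscal E (Kinj 1) x = x) /\
  (forall (a : idx E) (c : Kt k) (x : E), sn E a (vscal E c x) = Kabs c * sn E a x) /\
  (forall (a : idx E) (x y : E), sn E a (vadd E x y) <= sn E a x + sn E a y) /\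
  inhabited (idx E) /\
  (forall a b : idx E, exists c : idx E, forall x : E,
      sn E a x <= sn E c x /\ sn E b x <= sn E c x) /\
  (forall x : E, (forall a : idx E, sn E a x = 0) -> x = vzero E).

Definition Kspace (k : Kind) : LCS k := {|
  car := Kt k; vzero := Kinj 0; vadd := Kadd; vopp := Kopp; vscal := Kmul;
  idx := unit; sn := fun _ x => Kabs x |}.

Definition bounded {k} (E : LCS k) (B : E -> Prop) : Prop :=
  forall a : idx E, exists M : R, forall x, B x -> sn E a x <= M.

Definition in_dual {k} (E : LCS k) (e : E -> Kt k) : Prop :=
  (forall x y : E, e (vadd E x y) = Kadd (e x) (e y)) /\
  (forall (c : Kt k) (x : E), e (vscal E c x) = Kmul c (e x)) /\
  (exists (a : idx E) (C : R), forall x : E, Kabs (e x) <= C * sn E a x).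

Definition dual_subspace {k} (E : LCS k) (G : (E -> Kt k) -> Prop) : Prop :=
  (forall e, G e -> in_dual E e) /\
  G (fun _ => Kinj 0) /\
  (forall e1 e2, G e1 -> G e2 -> G (fun x => Kadd (e1 x) (e2 x))) /\
  (forall (c : Kt k) e, G e -> G (fun x => Kmul c (e x))).

Definition weakly_bounded {k} (E : LCS k) (G : (E -> Kt k) -> Prop)
  (B : E -> Prop) : Prop :=
  forall e, G e -> exists M : R, forall x, B x -> Kabs (e x) <= M.

Definition determines_boundedness {k} (E : LCS k) (G : (E -> Kt k) -> Prop) : Prop :=
  forall B : E -> Prop, weakly_bounded E G B -> bounded E B.

Definition closed_set {k} (E : LCS k) (D : E -> Prop) : Prop :=
  forall x : E,
    (forall (a : idx E) (eps : R), 0 < eps -> exists y, D y /\ sn E a (vsub E x y) < eps) ->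
    D x.

Definition abs_convex {k} (E : LCS k) (D : E -> Prop) : Prop :=
  forall (x y : E) (c1 c2 : Kt k), D x -> D y -> Kabs c1 + Kabs c2 <= 1 ->
    D (vadd E (vscal E c1 x) (vscal E c2 y)).

Definition in_mult {k} (E : LCS k) (D : E -> Prop) (t : R) (x : E) : Prop :=
  exists y, D y /\ x = vscal E (Kinj t) y.

Definition in_span {k} (E : LCS k) (D : E -> Prop) (x : E) : Prop :=
  exists n : nat, in_mult E D (INR n) x.

(* gauge_D(x) < eps, i.e. inf{t > 0 | x ∈ t D} < eps *)
Definition gauge_lt {k} (E : LCS k) (D : E -> Prop) (x : E) (eps : R) : Prop :=
  exists t, 0 < t /\ t < eps /\ in_mult E D t x.

(* (E_D, gauge of D) is a Banach space: every Cauchy sequence converges *)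
Definition gauge_Banach {k} (E : LCS k) (D : E -> Prop) : Prop :=
  forall u : nat -> E,
    (forall n, in_span E D (u n)) ->
    (forall eps, 0 < eps -> exists N, forall m n, (N <= m)%nat -> (N <= n)%nat ->
        gauge_lt E D (vsub E (u m) (u n)) eps) ->
    exists x, in_span E D x /\
      forall eps, 0 < eps -> exists N, forall n, (N <= n)%nat ->
        gauge_lt E D (vsub E (u n) x) eps.

Definition locally_complete {k} (E : LCS k) : Prop :=
  forall D : E -> Prop, closed_set E D -> bounded E D -> abs_convex E D ->
    gauge_Banach E D.

(* Points of R^d are functions nat -> R vanishing at coordinates >= d. *)
Definition inRd (d : nat) (x : nat -> R) : Prop :=
  forall i, (d <= i)%nat -> x i = 0.

Fixpoint sumsq (d : nat) (x y : nat -> R) : R :=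
  match d with
  | O => 0
  | S n => sumsq n x y + (x n - y n) * (x n - y n)
  end.

Definition dist (d : nat) (x y : nat -> R) : R := sqrt (sumsq d x y).

Definition open_Rd (d : nat) (U : (nat -> R) -> Prop) : Prop :=
  forall x, inRd d x -> U x ->
    exists r, 0 < r /\ forall y, inRd d y -> dist d x y < r -> U y.

Definition open_domain (d : nat) (Om : (nat -> R) -> Prop) : Prop :=
  (forall x, Om x -> inRd d x) /\ open_Rd d Om.

Definition compact_Rd (d : nat) (K : (nat -> R) -> Prop) : Prop :=
  (forall x, K x -> inRd d x) /\
  forall (J : Type) (U : J -> (nat -> R) -> Prop),
    (forall j, open_Rd d (U j)) ->
    (forall x, K x -> exists j, U j x) ->
    exists l : list J, forall x, K x -> exists j, In j l /\ U j x.

Definition shift (x : nat -> R) (i : nat) (h : R) : nat -> R :=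
  fun j => if Nat.eqb j i then x j + h else x j.

Section Diff.
Context {k : Kind} (E : LCS k) (d : nat) (Om : (nat -> R) -> Prop).

Definition has_partial (i : nat) (f g : (nat -> R) -> E) : Prop :=
  forall x, Om x ->
    forall (a : idx E) (eps : R), 0 < eps -> exists delta, 0 < delta /\
      forall h, h <> 0 -> Rabs h < delta -> Om (shift x i h) ->
        sn E a (vsub E (vscal E (Kinj (/ h)) (vsub E (f (shift x i h)) (f x))) (g x)) < eps.

Fixpoint is_deriv (l : list nat) (f g : (nat -> R) -> E) : Prop :=
  match l with
  | nil => forall x, Om x -> g x = f x
  | i :: l' => exists h, has_partial i f h /\ is_deriv l' h g
  end.

Definition cont_on (g : (nat -> R) -> E) : Prop :=
  forall x, Om x -> forall (a : idx E) (eps : R), 0 < eps ->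
    exists delta, 0 < delta /\
      forall y, Om y -> dist d x y < delta -> sn E a (vsub E (g y) (g x)) < eps.

Definition dir_ok (l : list nat) : Prop := Forall (fun i => (i < d)%nat) l.

Definition Ck (n : nat) (f : (nat -> R) -> E) : Prop :=
  forall l, (length l <= n)%nat -> dir_ok l ->
    exists g, is_deriv l f g /\ cont_on g.

Definition Ckg_loc (n : nat) (gam : R) (f : (nat -> R) -> E) : Prop :=
  Ck n f /\
  forall K : (nat -> R) -> Prop, compact_Rd d K -> (forall x, K x -> Om x) ->
  forall a : idx E,
    (forall l g, (length l <= n)%nat -> dir_ok l -> is_deriv l f g ->
       exists M, forall x, K x -> sn E a (g x) <= M) /\
    (forall l g, length l = n -> dir_ok l -> is_deriv l f g ->
       exists M, forall x y, K x -> K y -> 0 < dist d x y ->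
         sn E a (vsub E (g x) (g y)) <= M * Rpower (dist d x y) gam).

End Diff.

(* Main.v *)
Require Import Defs.
From Stdlib Require Import Reals Lra List.
From Stdlib Require Import Lia FunctionalExtensionality IndefiniteDescription Classical ZArith.
From Coquelicot Require Complex Compactness Derive.
Require Import Defs.
Open Scope R_scope.

Open Scope R_scope.

Definition Kre {k : Kind} : Kt k -> R :=
  match k with KReal => fun a => a | KCplx => fun a => fst a end.
Definition Kim {k : Kind} : Kt k -> R :=
  match k with KReal => fun a => 0 | KCplx => fun a => snd a end.

Lemma sqrt_Cmod (a : R * R) : sqrt (fst a * fst a + snd a * snd a) = Complex.Cmod a.
Proof. unfold Complex.Cmod. f_equal. simpl. ring. Qed.

Lemma Kre_le {k} (a : Kt k) : Rabs (Kre a) <= Kabs a.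
Proof. destruct k; simpl. apply Rle_refl. rewrite sqrt_Cmod.
  eapply Rle_trans;[|apply Complex.Rmax_Cmod]. apply Rmax_l. Qed.
Lemma Kim_le {k} (a : Kt k) : Rabs (Kim a) <= Kabs a.
Proof. destruct k; simpl. rewrite Rabs_R0. apply Rabs_pos. rewrite sqrt_Cmod.
  eapply Rle_trans;[|apply Complex.Rmax_Cmod]. apply Rmax_r. Qed.
Lemma Kabs_le_re_im {k} (a : Kt k) : Kabs a <= Rabs (Kre a) + Rabs (Kim a).
Proof. destruct k; simpl. rewrite Rabs_R0; lra.
  destruct a as [x y]; simpl.
  assert (H: sqrt (x*x+y*y) <= sqrt ((Rabs x + Rabs y)*(Rabs x + Rabs y))).
  { apply sqrt_le_1_alt. pose proof (Rabs_pos x); pose proof (Rabs_pos y).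
    assert (x*x = Rabs x * Rabs x) by (rewrite <- Rabs_mult; rewrite Rabs_right; nra).
    assert (y*y = Rabs y * Rabs y) by (rewrite <- Rabs_mult; rewrite Rabs_right; nra).
    nra. }
  rewrite sqrt_square in H; auto. pose proof (Rabs_pos x); pose proof (Rabs_pos y); lra. Qed.
Lemma Kabs_pos {k} (a : Kt k) : 0 <= Kabs a.
Proof. destruct k; simpl. apply Rabs_pos. apply sqrt_pos. Qed.
Lemma Kre_add {k} (a b : Kt k) : Kre (Kadd a b) = Kre a + Kre b.
Proof. destruct k; simpl; lra. Qed.
Lemma Kim_add {k} (a b : Kt k) : Kim (Kadd a b) = Kim a + Kim b.
Proof. destruct k; simpl; lra. Qed.
Lemma Kre_opp {k} (a : Kt k) : Kre (Kopp a) = - Kre a.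
Proof. destruct k; simpl; lra. Qed.
Lemma Kim_opp {k} (a : Kt k) : Kim (Kopp a) = - Kim a.
Proof. destruct k; simpl; lra. Qed.
Lemma Kre_mul_inj {k} r (a : Kt k) : Kre (Kmul (Kinj r) a) = r * Kre a.
Proof. destruct k; simpl; ring. Qed.
Lemma Kim_mul_inj {k} r (a : Kt k) : Kim (Kmul (Kinj r) a) = r * Kim a.
Proof. destruct k; simpl; ring. Qed.
Lemma Kabs_inj {k} r : @Kabs k (Kinj r) = Rabs r.
Proof. destruct k; simpl. auto. replace (r*r+0*0) with (r*r) by ring. apply sqrt_Rsqr_abs. Qed.
Lemma Kmul_inj {k} a b : Kmul (@Kinj k a) (Kinj b) = Kinj (a*b).
Proof. destruct k; simpl; auto. f_equal; ring. Qed.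
Lemma Kadd_inj {k} a b : Kadd (@Kinj k a) (Kinj b) = Kinj (a+b).
Proof. destruct k; simpl; auto. f_equal; ring. Qed.

Lemma Kspace_lcHs k : lcHs (Kspace k).
Proof.
  unfold lcHs; simpl.
  destruct k; simpl.
  - split;[intros; ring|]. split;[intros; ring|]. split;[intros; ring|].
    split;[intros; ring|]. split;[intros; ring|]. split;[intros; ring|].
    split;[intros; ring|]. split;[intros; ring|].
    split;[intros; apply Rabs_mult|]. split;[intros; apply Rabs_triang|].
    split;[constructor; exact tt|]. split;[intros; exists tt; intros; lra|].
    intros x H; specialize (H tt); destruct (Rcase_abs x); [rewrite Rabs_left in H|rewrite Rabs_right in H]; lra.
  - split;[intros; f_equal; ring|]. split;[intros; f_equal; ring|].
    split;[intros [? ?]; simpl; f_equal; ring|].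
    split;[intros; f_equal; ring|]. split;[intros; f_equal; ring|]. split;[intros; f_equal; ring|].
    split;[intros; f_equal; ring|]. split;[intros [? ?]; simpl; f_equal; ring|].
    split;[intros; rewrite !sqrt_Cmod, <- (Complex.Cmod_mult c x), <- sqrt_Cmod; simpl; f_equal; ring|].
    split;[intros; rewrite !sqrt_Cmod; eapply Rle_trans;[|apply (Complex.Cmod_triangle x y)]; rewrite <- sqrt_Cmod; simpl; right; f_equal; ring|].
    split;[constructor; exact tt|]. split;[intros; exists tt; intros; lra|].
    intros x H. specialize (H tt). rewrite sqrt_Cmod in H. apply Complex.Cmod_eq_0 in H.
      rewrite H. reflexivity.
Qed.

Lemma abs_le_bt a b : Rabs a <= b -> - b <= a <= b.
Proof. intro H. destruct (Rcase_abs a); [rewrite Rabs_left in H|rewrite Rabs_right in H]; lra. Qed.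
Lemma abs_lt_bt a b : Rabs a < b -> - b < a < b.
Proof. intro H. destruct (Rcase_abs a); [rewrite Rabs_left in H|rewrite Rabs_right in H]; lra. Qed.

Open Scope R_scope.

Section LCSL.
Context {k : Kind} (E : LCS k) (HE : lcHs E).

Lemma v_assoc (x y z : E) : vadd E x (vadd E y z) = vadd E (vadd E x y) z.
Proof. destruct HE as (A1&A2&A3&A4&S1&S2&S3&S4&N1&N2&I&D&H); auto. Qed.
Lemma v_comm (x y : E) : vadd E x y = vadd E y x.
Proof. destruct HE as (A1&A2&A3&A4&S1&S2&S3&S4&N1&N2&I&D&H); auto. Qed.
Lemma v_0r (x : E) : vadd E x (vzero E) = x.
Proof. destruct HE as (A1&A2&A3&A4&S1&S2&S3&S4&N1&N2&I&D&H); auto. Qed.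
Lemma v_oppr (x : E) : vadd E x (vopp E x) = vzero E.
Proof. destruct HE as (A1&A2&A3&A4&S1&S2&S3&S4&N1&N2&I&D&H); auto. Qed.
Lemma s_addr c (x y : E) : vscal E c (vadd E x y) = vadd E (vscal E c x) (vscal E c y).
Proof. destruct HE as (A1&A2&A3&A4&S1&S2&S3&S4&N1&N2&I&D&H); auto. Qed.
Lemma s_addl c d (x : E) : vscal E (Kadd c d) x = vadd E (vscal E c x) (vscal E d x).
Proof. destruct HE as (A1&A2&A3&A4&S1&S2&S3&S4&N1&N2&I&D&H); auto. Qed.
Lemma s_mul c d (x : E) : vscal E (Kmul c d) x = vscal E c (vscal E d x).
Proof. destruct HE as (A1&A2&A3&A4&S1&S2&S3&S4&N1&N2&I&D&H); auto. Qed.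
Lemma s_1 (x : E) : vscal E (Kinj 1) x = x.
Proof. destruct HE as (A1&A2&A3&A4&S1&S2&S3&S4&N1&N2&I&D&H); auto. Qed.
Lemma sn_scal a c (x : E) : sn E a (vscal E c x) = Kabs c * sn E a x.
Proof. destruct HE as (A1&A2&A3&A4&S1&S2&S3&S4&N1&N2&I&D&H); auto. Qed.
Lemma sn_tri a (x y : E) : sn E a (vadd E x y) <= sn E a x + sn E a y.
Proof. destruct HE as (A1&A2&A3&A4&S1&S2&S3&S4&N1&N2&I&D&H); auto. Qed.
Lemma sn_haus (x : E) : (forall a, sn E a x = 0) -> x = vzero E.
Proof. destruct HE as (A1&A2&A3&A4&S1&S2&S3&S4&N1&N2&I&D&H); auto. Qed.
Lemma idx_inh : inhabited (idx E).
Proof. destruct HE as (A1&A2&A3&A4&S1&S2&S3&S4&N1&N2&I&D&H); auto. Qed.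

Lemma v_0l (x : E) : vadd E (vzero E) x = x.
Proof. rewrite v_comm; apply v_0r. Qed.
Lemma v_oppl (x : E) : vadd E (vopp E x) x = vzero E.
Proof. rewrite v_comm; apply v_oppr. Qed.
Lemma idem_zero (z : E) : vadd E z z = z -> z = vzero E.
Proof. intro H. transitivity (vadd E (vadd E z z) (vopp E z)).
  rewrite <- v_assoc, v_oppr, v_0r; reflexivity. rewrite H; apply v_oppr. Qed.
Lemma opp_unique (a x : E) : vadd E a x = vzero E -> a = vopp E x.
Proof. intro H. rewrite <- (v_0r a), <- (v_oppr x), v_assoc, H, v_0l. reflexivity. Qed.
Lemma s_0l (x : E) : vscal E (Kinj 0) x = vzero E.
Proof. apply idem_zero. rewrite <- s_addl, Kadd_inj. f_equal. f_equal. ring. Qed.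
Lemma s_0r c : vscal E c (vzero E) = vzero E.
Proof. apply idem_zero. rewrite <- s_addr, v_0r. reflexivity. Qed.
Lemma opp_scal (x : E) : vopp E x = vscal E (Kinj (-1)) x.
Proof. symmetry. apply opp_unique. rewrite <- (s_1 x) at 2. rewrite <- s_addl, Kadd_inj.
  replace (-1+1) with 0 by ring. apply s_0l. Qed.
Lemma sn_0 a : sn E a (vzero E) = 0.
Proof. rewrite <- (s_0l (vzero E)), sn_scal, Kabs_inj, Rabs_R0. ring. Qed.
Lemma sn_opp a (x : E) : sn E a (vopp E x) = sn E a x.
Proof. rewrite opp_scal, sn_scal, Kabs_inj. replace (Rabs (-1)) with 1 by (rewrite Rabs_left; lra). ring. Qed.
Lemma sn_pos a (x : E) : 0 <= sn E a x.
Proof. pose proof (sn_tri a x (vopp E x)). rewrite v_oppr, sn_0, sn_opp in H. lra. Qed.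
Lemma sn_scal_inj a r (x : E) : sn E a (vscal E (Kinj r) x) = Rabs r * sn E a x.
Proof. rewrite sn_scal, Kabs_inj. reflexivity. Qed.
Lemma s_comp a b (x : E) : vscal E (Kinj a) (vscal E (Kinj b) x) = vscal E (Kinj (a*b)) x.
Proof. rewrite <- s_mul, Kmul_inj. reflexivity. Qed.
Lemma opp_opp (x : E) : vopp E (vopp E x) = x.
Proof. symmetry. apply opp_unique. apply v_oppr. Qed.
Lemma opp_add (x y : E) : vopp E (vadd E x y) = vadd E (vopp E x) (vopp E y).
Proof. symmetry. apply opp_unique.
  rewrite (v_comm x y), <- v_assoc, (v_assoc (vopp E y)), v_oppl, v_0l, v_oppl. reflexivity. Qed.
Lemma vsub_split (x y z : E) : vsub E x z = vadd E (vsub E x y) (vsub E y z).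
Proof. unfold vsub. rewrite <- v_assoc, (v_assoc (vopp E y)), v_oppl, v_0l. reflexivity. Qed.
Lemma sn_sub_tri a (x y z : E) : sn E a (vsub E x z) <= sn E a (vsub E x y) + sn E a (vsub E y z).
Proof. rewrite (vsub_split x y z). apply sn_tri. Qed.
Lemma vsub_swap (x y : E) : vsub E y x = vopp E (vsub E x y).
Proof. unfold vsub. rewrite opp_add, opp_opp, v_comm. reflexivity. Qed.
Lemma sn_sub_sym a (x y : E) : sn E a (vsub E x y) = sn E a (vsub E y x).
Proof. rewrite (vsub_swap x y), sn_opp. reflexivity. Qed.
Lemma sn_le_sub a (x y : E) : sn E a x <= sn E a y + sn E a (vsub E x y).
Proof. replace x with (vadd E y (vsub E x y)) at 1. apply sn_tri.
  unfold vsub. rewrite v_comm, <- v_assoc, v_oppl, v_0r. reflexivity. Qed.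
Lemma vsub_self (x : E) : vsub E x x = vzero E.
Proof. apply v_oppr. Qed.
Lemma s_opp c (x : E) : vscal E c (vopp E x) = vopp E (vscal E c x).
Proof. apply opp_unique. rewrite <- s_addr, v_oppl. apply s_0r. Qed.
Lemma s_sub c (x y : E) : vscal E c (vsub E x y) = vsub E (vscal E c x) (vscal E c y).
Proof. unfold vsub. rewrite s_addr, s_opp. reflexivity. Qed.
Lemma vsub_vsub (a b c : E) : vsub E (vsub E a c) (vsub E b c) = vsub E a b.
Proof. change (vsub E (vsub E a c) (vsub E b c)) with (vadd E (vsub E a c) (vopp E (vsub E b c))).
  rewrite <- vsub_swap. symmetry; apply vsub_split. Qed.
Lemma vsub_addr (a b c : E) : vsub E a (vadd E b c) = vsub E (vsub E a b) c.
Proof. unfold vsub. rewrite opp_add, v_assoc. reflexivity. Qed.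
Lemma s_inv_cancel t (x : E) : t <> 0 -> vscal E (Kinj t) (vscal E (Kinj (/t)) x) = x.
Proof. intro H. rewrite s_comp, Rinv_r by auto. apply s_1. Qed.
Lemma vsub_0 (x : E) : vsub E x (vzero E) = x.
Proof. unfold vsub. rewrite <- (opp_unique (vzero E) (vzero E)) by apply v_0r. apply v_0r. Qed.
Lemma vadd_sub (x y : E) : vsub E (vadd E x y) x = y.
Proof. unfold vsub. rewrite (v_comm x y), <- v_assoc, v_oppr, v_0r. reflexivity. Qed.

Lemma add_sub (x y : E) : vadd E y (vsub E x y) = x.
Proof. unfold vsub. rewrite v_comm, <- v_assoc, v_oppl, v_0r. reflexivity. Qed.
Lemma vsub_eq0 (x y : E) : vsub E x y = vzero E -> x = y.
Proof. intro H. rewrite <- (add_sub x y), H, v_0r. reflexivity. Qed.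

Lemma dual_0 (e : E -> Kt k) : in_dual E e -> e (vzero E) = Kinj 0.
Proof. intros [Ha [Hs _]]. rewrite <- (s_0l (vzero E)), Hs. destruct k; simpl; try ring.
  f_equal; ring. Qed.
Lemma dual_opp (e : E -> Kt k) x : in_dual E e -> e (vopp E x) = Kopp (e x).
Proof. intros [Ha [Hs _]]. rewrite opp_scal, Hs. destruct k; simpl; try ring.
  f_equal; ring. Qed.
Lemma dual_sub (e : E -> Kt k) x y : in_dual E e -> e (vsub E x y) = vsub (Kspace k) (e x) (e y).
Proof. intros H. unfold vsub. destruct H as [Ha Hs]. rewrite Ha. simpl.
  rewrite (dual_opp e y); auto. split; auto. Qed.
Lemma dual_scal (e : E -> Kt k) c x : in_dual E e -> e (vscal E c x) = vscal (Kspace k) c (e x).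
Proof. intros [_ [Hs _]]. apply Hs. Qed.
Lemma dual_bound (e : E -> Kt k) : in_dual E e -> exists a C, 0 < C /\ forall x, Kabs (e x) <= C * sn E a x.
Proof. intros [_ [_ [a [C H]]]]. exists a, (Rabs C + 1). split. pose proof (Rabs_pos C); lra.
  intro x. eapply Rle_trans. apply H. pose proof (sn_pos a x). pose proof (Rle_abs C). nra. Qed.

End LCSL.

Open Scope R_scope.

Lemma sumsq_pos d x y : 0 <= sumsq d x y.
Proof. induction d; simpl. lra. pose proof (Rle_0_sqr (x d - y d)); unfold Rsqr in *; lra. Qed.
Lemma sumsq_sym d x y : sumsq d x y = sumsq d y x.
Proof. induction d; simpl. auto. rewrite IHd. ring. Qed.
Lemma rd_dist_pos d x y : 0 <= dist d x y.
Proof. apply sqrt_pos. Qed.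
Lemma rd_dist_sym d x y : dist d x y = dist d y x.
Proof. unfold dist. rewrite sumsq_sym. auto. Qed.

Lemma sumsq_coord d x y k : (k < d)%nat -> (x k - y k) * (x k - y k) <= sumsq d x y.
Proof. induction d; intros H. lia. simpl. destruct (Nat.eq_dec k d).
  subst. pose proof (sumsq_pos d x y). lra.
  assert (k < d)%nat by lia. specialize (IHd H0). pose proof (Rle_0_sqr (x d - y d)); unfold Rsqr in *; lra. Qed.

Lemma coord_le_dist d x y k : (k < d)%nat -> Rabs (x k - y k) <= dist d x y.
Proof. intro H. unfold dist. rewrite <- sqrt_Rsqr_abs. apply sqrt_le_1_alt.
  unfold Rsqr. apply sumsq_coord; auto. Qed.

Lemma sumsq_le_max d x y m : 0 <= m -> (forall k, (k < d)%nat -> Rabs (x k - y k) <= m) ->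
  sumsq d x y <= INR d * (m * m).
Proof. intros Hm. induction d; intros H. simpl. lra.
  rewrite S_INR. simpl. assert (Hd : (d < S d)%nat) by lia. specialize (H d Hd) as Hk.
  assert ((x d - y d) * (x d - y d) <= m * m).
  { replace ((x d - y d) * (x d - y d)) with (Rabs (x d - y d) * Rabs (x d - y d)).
    2:{ rewrite <- Rabs_mult. apply Rabs_right. apply Rle_ge, Rle_0_sqr. }
    pose proof (Rabs_pos (x d - y d)). nra. }
  assert (sumsq d x y <= INR d * (m*m)) by (apply IHd; intros; apply H; lia). lra. Qed.

Lemma dist_le_max d x y m : 0 <= m -> (forall k, (k < d)%nat -> Rabs (x k - y k) <= m) ->
  dist d x y <= (INR d + 1) * m.
Proof. intros Hm H. unfold dist. pose proof (sumsq_le_max d x y m Hm H).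
  pose proof (pos_INR d).
  rewrite <- (sqrt_square ((INR d + 1) * m)) by nra. apply sqrt_le_1_alt. nra. Qed.

Lemma shift_0 w j : shift w j 0 = w.
Proof. apply functional_extensionality; intro i; unfold shift. destruct (Nat.eqb i j); lra. Qed.
Lemma shift_shift w j t s : shift (shift w j t) j s = shift w j (t + s).
Proof. apply functional_extensionality; intro i; unfold shift. destruct (Nat.eqb i j); lra. Qed.
Lemma shift_inRd d x i h : inRd d x -> (i < d)%nat -> inRd d (shift x i h).
Proof. intros Hx Hi j Hj. unfold shift. destruct (Nat.eqb_spec j i). lia. auto. Qed.

Lemma sumsq_eq0 n x y : (forall j, (j < n)%nat -> x j = y j) -> sumsq n x y = 0.
Proof. induction n; intros H; simpl. auto. rewrite IHn by (intros; apply H; lia).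
  rewrite H by lia. ring. Qed.
Lemma sumsq_shift n x i h : (i < n)%nat -> sumsq n x (shift x i h) = h * h.
Proof. induction n; intros H. lia. simpl. destruct (Nat.eqb_spec n i).
  - subst i. rewrite sumsq_eq0. unfold shift; rewrite Nat.eqb_refl; ring.
    intros j Hj. unfold shift. destruct (Nat.eqb_spec j n). lia. auto.
  - rewrite IHn by lia. unfold shift. apply Nat.eqb_neq in n0; rewrite n0; ring. Qed.
Lemma dist_shift d x i h : (i < d)%nat -> dist d x (shift x i h) = Rabs h.
Proof. intro H. unfold dist. rewrite sumsq_shift by auto. apply sqrt_Rsqr_abs. Qed.

Lemma dist0_eq d x y : inRd d x -> inRd d y -> dist d x y = 0 -> x = y.
Proof. intros Hx Hy H. apply functional_extensionality; intro j.
  destruct (Nat.lt_ge_cases j d).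
  - pose proof (coord_le_dist d x y j H0). rewrite H in H1. pose proof (Rabs_pos (x j - y j)).
    assert (Rabs (x j - y j) = 0) by lra. destruct (Rcase_abs (x j - y j));
    [rewrite Rabs_left in H3|rewrite Rabs_right in H3]; lra.
  - rewrite Hx, Hy; auto. Qed.

Lemma lst_max {J} (l : list J) (P : J -> R -> Prop) :
  (forall j, In j l -> exists M, forall M', M <= M' -> P j M') ->
  exists M, 0 <= M /\ forall j, In j l -> forall M', M <= M' -> P j M'.
Proof. induction l; intros H. exists 0; split; [lra| intros j []].
  destruct IHl as [M [HM0 HM]]. intros; apply H; right; auto.
  destruct (H a (or_introl eq_refl)) as [Ma HMa].
  exists (Rmax M Ma). split. eapply Rle_trans; [apply HM0| apply Rmax_l].
  intros j [<-|Hj] M' HM'. apply HMa. eapply Rle_trans;[apply Rmax_r|exact HM'].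
  apply HM; auto. eapply Rle_trans;[apply Rmax_l|exact HM']. Qed.

Lemma lst_min {J} (l : list J) (P : J -> R -> Prop) :
  (forall j, In j l -> exists s, 0 < s /\ forall t, 0 < t -> t <= s -> P j t) ->
  exists s, 0 < s /\ forall j, In j l -> forall t, 0 < t -> t <= s -> P j t.
Proof. induction l; intros H. exists 1; split; [lra| intros j []].
  destruct IHl as [M [HM0 HM]]. intros; apply H; right; auto.
  destruct (H a (or_introl eq_refl)) as [Ma [HMa0 HMa]].
  exists (Rmin M Ma). split. apply Rmin_glb_lt; auto.
  intros j [<-|Hj] t Ht Ht'. apply HMa; auto. eapply Rle_trans;[exact Ht'|apply Rmin_r].
  apply HM; auto. eapply Rle_trans;[exact Ht'|apply Rmin_l]. Qed.

Lemma in_seq0 n j : In j (seq 0 n) <-> (j < n)%nat.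
Proof. rewrite in_seq. lia. Qed.

Lemma nat_max n (P : nat -> R -> Prop) :
  (forall j, (j < n)%nat -> exists M, forall M', M <= M' -> P j M') ->
  exists M, 0 <= M /\ forall j, (j < n)%nat -> forall M', M <= M' -> P j M'.
Proof. intros H. destruct (lst_max (seq 0 n) P) as [M [HM0 HM]].
  intros j Hj; apply H; apply in_seq0; auto.
  exists M; split; auto. intros j Hj; apply HM; apply in_seq0; auto. Qed.

Lemma nat_min n (P : nat -> R -> Prop) :
  (forall j, (j < n)%nat -> exists s, 0 < s /\ forall t, 0 < t -> t <= s -> P j t) ->
  exists s, 0 < s /\ forall j, (j < n)%nat -> forall t, 0 < t -> t <= s -> P j t.
Proof. intros H. destruct (lst_min (seq 0 n) P) as [M [HM0 HM]].
  intros j Hj; apply H; apply in_seq0; auto.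
  exists M; split; auto. intros j Hj; apply HM; apply in_seq0; auto. Qed.

Definition cube (d : nat) (z : nat -> R) (r : R) : (nat -> R) -> Prop :=
  fun y => inRd d y /\ forall k, (k < d)%nat -> Rabs (y k - z k) <= r.

Lemma cube_diam d z r y w : 0 <= r -> cube d z r y -> cube d z r w -> dist d y w <= (INR d + 1) * (2 * r).
Proof. intros Hr [_ Hy] [_ Hw]. apply dist_le_max. lra. intros k Hk.
  specialize (Hy k Hk); specialize (Hw k Hk).
  replace (y k - w k) with ((y k - z k) - (w k - z k)) by ring.
  eapply Rle_trans. apply Rabs_triang. rewrite Rabs_Ropp. lra. Qed.

Lemma cube_small d Om x eps : open_domain d Om -> Om x -> 0 < eps ->
  exists r, 0 < r /\ r <= eps /\ (forall y, cube d x r y -> Om y) /\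
    (forall y w, cube d x r y -> cube d x r w -> dist d y w <= 1).
Proof. intros [Hin Hop] Hx He. destruct (Hop x (Hin x Hx) Hx) as [rho [Hrho Hb]].
  pose proof (pos_INR d).
  set (r := Rmin eps (Rmin (rho / (INR d + 2)) (/ (2 * (INR d + 1))))).
  assert (Hr1 : r <= eps) by apply Rmin_l.
  assert (Hr2 : r <= rho / (INR d + 2)) by (eapply Rle_trans;[apply Rmin_r|apply Rmin_l]).
  assert (Hr3 : r <= / (2 * (INR d + 1))) by (eapply Rle_trans;[apply Rmin_r|apply Rmin_r]).
  assert (Hr0 : 0 < r). { apply Rmin_glb_lt; auto. apply Rmin_glb_lt.
    apply Rdiv_lt_0_compat; lra. apply Rinv_0_lt_compat; lra. }
  exists r. split; auto. split; auto. split.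
  - intros y Hy. apply Hb. apply Hy. destruct Hy as [_ Hy].
    eapply Rle_lt_trans. apply (dist_le_max d x y r). lra. intros k Hk. rewrite <- Rabs_Ropp.
    replace (- (x k - y k)) with (y k - x k) by ring. apply Hy; auto.
    apply Rmult_le_compat_l with (r := INR d + 2) in Hr2; [|lra].
    replace ((INR d + 2) * (rho / (INR d + 2))) with rho in Hr2 by (field; lra).
    assert ((INR d + 1) * r < (INR d + 2) * r) by (apply Rmult_lt_compat_r; lra). lra.
  - intros y w Hy Hw. eapply Rle_trans. apply (cube_diam d x r); auto; lra.
    apply Rmult_le_compat_l with (r := 2 * (INR d + 1)) in Hr3; [|lra].
    rewrite Rinv_r in Hr3 by lra. lra. Qed.

Fixpoint toT (n : nat) (x : nat -> R) : Compactness.Tn n R :=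
  match n with O => tt | S n' => (x O, toT n' (fun j => x (S j))) end.
Fixpoint ofT (n : nat) : Compactness.Tn n R -> nat -> R :=
  match n with
  | O => fun _ _ => 0
  | S n' => fun t j => match j with O => fst t | S j' => ofT n' (snd t) j' end
  end.

Lemma ofT_toT n x k : (k < n)%nat -> ofT n (toT n x) k = x k.
Proof. revert x k; induction n; intros x k H. lia. destruct k; simpl; auto.
  rewrite IHn; auto. lia. Qed.
Lemma ofT_out n t k : (n <= k)%nat -> ofT n t k = 0.
Proof. revert t k; induction n; intros t k H; simpl. auto. destruct k. lia.
  apply IHn. lia. Qed.
Lemma bounded_n_iff n a b t : Compactness.bounded_n n a b t <->
  forall k, (k < n)%nat -> ofT n a k <= ofT n t k <= ofT n b k.
Proof. revert a b t; induction n; intros a b t; simpl. split; auto; intros; lia.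
  destruct a as [a1 a2], b as [b1 b2], t as [t1 t2]. simpl. rewrite IHn. split.
  - intros [H1 H2] k Hk. destruct k; simpl; auto. apply H2; lia.
  - intros H. split. apply (H 0%nat); lia. intros k Hk. apply (H (S k)); lia. Qed.
Lemma close_n_iff n dl x t : Compactness.close_n n dl x t <->
  forall k, (k < n)%nat -> Rabs (ofT n x k - ofT n t k) < dl.
Proof. revert x t; induction n; intros x t; simpl. split; auto; intros; lia.
  destruct x as [x1 x2], t as [t1 t2]. simpl. rewrite IHn. split.
  - intros [H1 H2] k Hk. destruct k; simpl; auto. apply H2; lia.
  - intros H. split. apply (H 0%nat); lia. intros k Hk. apply (H (S k)); lia. Qed.

Lemma cube_compact d z r : compact_Rd d (cube d z r).
Proof.
  split. intros x [H _]; auto.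
  intros J U HU Hcov.
  destruct (classic (exists p, cube d z r p)) as [[p Hp]|Hne].
  2:{ exists nil. intros x Hx. exfalso. apply Hne. exists x. auto. }
  destruct (Hcov p Hp) as [j0 _].
  pose proof (pos_INR d) as Hd.
  assert (HF : forall t : Compactness.Tn d R, exists jd : J * posreal,
     cube d z r (ofT d t) -> forall y, inRd d y -> dist d (ofT d t) y < (INR d + 2) * pos (snd jd) ->
       U (fst jd) y).
  { intro t. destruct (classic (cube d z r (ofT d t))) as [Ht|Ht].
    - destruct (Hcov _ Ht) as [j Hj]. destruct (HU j (ofT d t) (proj1 Ht) Hj) as [rho [Hrho Hb]].
      assert (Hpos : 0 < rho / (INR d + 2)) by (apply Rdiv_lt_0_compat; lra).
      exists (j, mkposreal _ Hpos). intros _ y Hy Hdy. apply Hb; auto. simpl in Hdy.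
      replace ((INR d + 2) * (rho / (INR d + 2))) with rho in Hdy by (field; lra). auto.
    - exists (j0, mkposreal 1 Rlt_0_1). intro; contradiction. }
  destruct (functional_choice _ HF) as [F HFp].
  pose proof (Compactness.compactness_list d (toT d (fun k => z k - r)) (toT d (fun k => z k + r))
     (fun t => snd (F t))) as Hc.
  apply NNPP in Hc. destruct Hc as [l Hl].
  exists (map (fun t => fst (F t)) l). intros x Hx.
  destruct (Hl (toT d x)) as [t [Htl [Htb Htc]]].
  { apply bounded_n_iff. intros k Hk. rewrite !ofT_toT by auto. destruct Hx as [_ Hx].
    specialize (Hx k Hk). apply abs_le_bt in Hx; lra. }
  exists (fst (F t)). split. apply in_map_iff. exists t; auto.
  rewrite bounded_n_iff in Htb. rewrite close_n_iff in Htc.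
  assert (Hct : cube d z r (ofT d t)).
  { split. intros k Hk. apply ofT_out; auto. intros k Hk. specialize (Htb k Hk).
    rewrite !ofT_toT in Htb by auto. apply Rabs_le. lra. }
  apply (HFp t Hct x (proj1 Hx)).
  pose proof (cond_pos (snd (F t))) as Hp0.
  eapply Rle_lt_trans. apply (dist_le_max d (ofT d t) x (pos (snd (F t)))). lra.
  intros k Hk. specialize (Htc k Hk). rewrite ofT_toT in Htc by auto.
  rewrite <- Rabs_Ropp. replace (- (ofT d t k - x k)) with (x k - ofT d t k) by ring. lra.
  apply Rmult_lt_compat_r; lra.
Qed.

Open Scope R_scope.

Lemma le_2eps_0 (a : R) : 0 <= a -> (forall eps, 0 < eps -> a < 2 * eps) -> a = 0.
Proof. intros H0 H. destruct (Rle_lt_or_eq_dec 0 a H0) as [Hp|]; auto.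
  specialize (H (a/2) ltac:(lra)). lra. Qed.

Section Deriv.
Context {k : Kind} (E : LCS k) (HE : lcHs E) (d : nat) (Om : (nat -> R) -> Prop)
  (HOm : open_domain d Om).

Lemma hp_ext_f i f1 f2 g : (forall x, Om x -> f1 x = f2 x) ->
  has_partial E Om i f1 g -> has_partial E Om i f2 g.
Proof. intros Hf H x Hx a eps He. destruct (H x Hx a eps He) as [del [Hd Hb]].
  exists del; split; auto. intros h Hh Hh' Hs. rewrite <- !Hf by auto. apply Hb; auto. Qed.
Lemma hp_ext_g i f g1 g2 : (forall x, Om x -> g1 x = g2 x) ->
  has_partial E Om i f g1 -> has_partial E Om i f g2.
Proof. intros Hg H x Hx a eps He. destruct (H x Hx a eps He) as [del [Hd Hb]].
  exists del; split; auto. intros h Hh Hh' Hs. rewrite <- Hg by auto. apply Hb; auto. Qed.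

Lemma shift_in_Om x i : Om x -> (i < d)%nat -> exists rho, 0 < rho /\
  forall h, Rabs h < rho -> Om (shift x i h).
Proof. intros Hx Hi. destruct HOm as [Hin Hop]. destruct (Hop x (Hin x Hx) Hx) as [rho [Hr Hb]].
  exists rho; split; auto. intros h Hh. apply Hb. apply shift_inRd; auto.
  rewrite dist_shift; auto. Qed.

Lemma hp_unique i f g1 g2 : (i < d)%nat -> has_partial E Om i f g1 -> has_partial E Om i f g2 ->
  forall x, Om x -> g1 x = g2 x.
Proof. intros Hi H1 H2 x Hx.
  assert (vsub E (g1 x) (g2 x) = vzero E).
  { apply (sn_haus E HE). intro a. apply le_2eps_0. apply sn_pos; auto. intros eps He.
    destruct (H1 x Hx a eps He) as [d1 [Hd1 Hb1]]. destruct (H2 x Hx a eps He) as [d2 [Hd2 Hb2]].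
    destruct (shift_in_Om x i Hx Hi) as [rho [Hr Hs]].
    set (h := Rmin d1 (Rmin d2 rho) / 2).
    assert (Hm : 0 < Rmin d1 (Rmin d2 rho)) by (repeat apply Rmin_glb_lt; auto).
    assert (Hh0 : 0 < h) by (unfold h; lra).
    assert (Ha : Rabs h < Rmin d1 (Rmin d2 rho)) by (rewrite Rabs_right; unfold h; lra).
    assert (Hh1 : Rabs h < d1) by (eapply Rlt_le_trans; [exact Ha|apply Rmin_l]).
    assert (Hh2 : Rabs h < d2) by (eapply Rlt_le_trans; [exact Ha|eapply Rle_trans;[apply Rmin_r|apply Rmin_l]]).
    assert (Hh3 : Rabs h < rho) by (eapply Rlt_le_trans; [exact Ha|eapply Rle_trans;[apply Rmin_r|apply Rmin_r]]).
    assert (Hne : h <> 0) by lra.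
    specialize (Hb1 h Hne Hh1 (Hs h Hh3)). specialize (Hb2 h Hne Hh2 (Hs h Hh3)).
    eapply Rle_lt_trans. apply (sn_sub_tri E HE) with (y := vscal E (Kinj (/ h)) (vsub E (f (shift x i h)) (f x))).
    rewrite (sn_sub_sym E HE a (g1 x)). lra. }
  apply (vsub_eq0 E HE); auto. Qed.

Lemma isd_ext l f1 f2 g1 g2 : (forall x, Om x -> f1 x = f2 x) -> (forall x, Om x -> g1 x = g2 x) ->
  is_deriv E Om l f1 g1 -> is_deriv E Om l f2 g2.
Proof. revert f1 f2; induction l as [|i l IH]; intros f1 f2 Hf Hg H; simpl in *.
  - intros x Hx. rewrite <- Hg, <- Hf by auto. auto.
  - destruct H as [h [Hh Hl]]. exists h. split. apply hp_ext_f with f1; auto.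
    apply IH with h; auto. Qed.

Lemma isd_unique l f g1 g2 : dir_ok d l -> is_deriv E Om l f g1 -> is_deriv E Om l f g2 ->
  forall x, Om x -> g1 x = g2 x.
Proof. revert f; induction l as [|i l IH]; intros f Hl H1 H2 x Hx; simpl in *.
  - rewrite H1, H2; auto.
  - inversion Hl; subst. destruct H1 as [h1 [Hh1 Hl1]]. destruct H2 as [h2 [Hh2 Hl2]].
    apply IH with h1; auto. apply isd_ext with h2 g2; auto.
    intros; symmetry; apply (hp_unique i f h1 h2); auto. Qed.

Lemma isd_app_l l j f g : is_deriv E Om (l ++ j :: nil) f g ->
  exists h, is_deriv E Om l f h /\ has_partial E Om j h g.
Proof. revert f; induction l as [|i l IH]; intros f H; simpl in *.
  - destruct H as [h [Hh Hn]]. exists f. split; auto. apply hp_ext_g with h; auto.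
    intros; symmetry; auto.
  - destruct H as [h [Hh Hl]]. destruct (IH h Hl) as [h2 [H2 H3]]. exists h2.
    split; auto. exists h; auto. Qed.

Lemma isd_app_r l j f h g : is_deriv E Om l f h -> has_partial E Om j h g ->
  is_deriv E Om (l ++ j :: nil) f g.
Proof. revert f; induction l as [|i l IH]; intros f H Hp; simpl in *.
  - exists g. split. apply hp_ext_f with h; auto. intros; symmetry; auto. intros; auto.
  - destruct H as [h1 [Hh Hl]]. exists h1. split; auto. Qed.

Lemma isd_inherit i l f F g : (i < d)%nat -> has_partial E Om i f F ->
  is_deriv E Om (i :: l) f g -> is_deriv E Om l F g.
Proof. intros Hi HF [h [Hh Hl]]. apply isd_ext with h g; auto.
  intros; apply (hp_unique i f h F); auto. Qed.

Lemma Ck_mono n f : Ck E d Om (S n) f -> Ck E d Om n f.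
Proof. intros H l Hl Hd. apply H; auto. Qed.

Lemma Ck_inherit n i f F : (i < d)%nat -> has_partial E Om i f F -> Ck E d Om (S n) f -> Ck E d Om n F.
Proof. intros Hi HF H l Hl Hd. destruct (H (i :: l)) as [g [Hg Hc]]. simpl; lia. constructor; auto.
  exists g. split; auto. apply isd_inherit with i f; auto. Qed.

Lemma Ckg_inherit n gam i f F : (i < d)%nat -> has_partial E Om i f F ->
  Ckg_loc E d Om (S n) gam f -> Ckg_loc E d Om n gam F.
Proof. intros Hi HF [Hc Hb]. split. apply Ck_inherit with i f; auto.
  intros K HK HKO a. destruct (Hb K HK HKO a) as [B1 B2]. split.
  - intros l g Hl Hd Hg. apply (B1 (i :: l) g). simpl; lia. constructor; auto. exists F; auto.
  - intros l g Hl Hd Hg. apply (B2 (i :: l) g). simpl; lia. constructor; auto. exists F; auto. Qed.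

Lemma hp_transfer e i f F : in_dual E e -> has_partial E Om i f F ->
  has_partial (Kspace k) Om i (fun x => e (f x)) (fun x => e (F x)).
Proof. intros He H x Hx a eps Heps. destruct (dual_bound E HE e He) as [b [C [HC HCb]]].
  destruct (H x Hx b (eps / C)) as [del [Hd Hb]]. apply Rdiv_lt_0_compat; auto.
  exists del; split; auto. intros h Hh Hh' Hs.
  rewrite <- (dual_sub E HE e), <- (dual_scal E e), <- (dual_sub E HE e) by auto.
  change (sn (Kspace k) a) with (@Kabs k).
  eapply Rle_lt_trans. apply HCb. specialize (Hb h Hh Hh' Hs).
  apply Rmult_lt_compat_l with (r := C) in Hb; auto.
  replace (C * (eps / C)) with eps in Hb by (field; lra). auto. Qed.

Lemma isd_transfer e l f g : in_dual E e -> is_deriv E Om l f g ->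
  is_deriv (Kspace k) Om l (fun x => e (f x)) (fun x => e (g x)).
Proof. intros He. revert f; induction l as [|i l IH]; intros f H; simpl in *.
  - intros x Hx. rewrite H; auto.
  - destruct H as [h [Hh Hl]]. exists (fun x => e (h x)). split.
    apply hp_transfer; auto. apply IH; auto. Qed.

End Deriv.

Open Scope R_scope.

Section MVT.
Context {k : Kind} (d : nat) (Om : (nat -> R) -> Prop) (HOm : open_domain d Om).
Let K := Kspace k.
Let HK := Kspace_lcHs k.

Lemma Kabs_sub_tri (a b c : Kt k) : Kabs (vsub K a c) <= Kabs (vsub K a b) + Kabs (vsub K b c).
Proof. apply (sn_sub_tri K HK tt). Qed.

Lemma deriv_comp (c : Kt k -> R) phi psi j w t :
  (forall a b, c (Kadd a b) = c a + c b) -> (forall a, c (Kopp a) = - c a) ->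
  (forall r a, c (Kmul (Kinj r) a) = r * c a) -> (forall a, Rabs (c a) <= Kabs a) ->
  (j < d)%nat -> has_partial K Om j phi psi -> Om (shift w j t) ->
  derivable_pt_lim (fun s => c (phi (shift w j s))) t (c (psi (shift w j t))).
Proof. intros Ca Co Cm Cb Hj H Hp eps He.
  destruct (H _ Hp tt eps He) as [d1 [Hd1 Hb]].
  destruct (shift_in_Om d Om HOm _ j Hp Hj) as [rho [Hr Hs]].
  assert (Hm : 0 < Rmin d1 rho) by (apply Rmin_glb_lt; auto).
  exists (mkposreal _ Hm). intros h Hh Hh'. simpl in Hh'.
  assert (Hh1 : Rabs h < d1) by (eapply Rlt_le_trans;[exact Hh'|apply Rmin_l]).
  assert (Hh2 : Rabs h < rho) by (eapply Rlt_le_trans;[exact Hh'|apply Rmin_r]).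
  specialize (Hb h Hh Hh1 (Hs h Hh2)). rewrite shift_shift in Hb.
  eapply Rle_lt_trans;[|exact Hb]. simpl sn. eapply Rle_trans;[|apply Cb].
  right. f_equal. simpl vsub. unfold vsub; simpl. rewrite Ca, Co, Cm, Ca, Co. unfold Rdiv. ring. Qed.

Lemma mvt_comp (c : Kt k -> R) phi psi j w T :
  (forall a b, c (Kadd a b) = c a + c b) -> (forall a, c (Kopp a) = - c a) ->
  (forall r a, c (Kmul (Kinj r) a) = r * c a) -> (forall a, Rabs (c a) <= Kabs a) ->
  (j < d)%nat -> has_partial K Om j phi psi ->
  (forall t, Rmin 0 T <= t <= Rmax 0 T -> Om (shift w j t)) ->
  exists th, (Rmin 0 T <= th <= Rmax 0 T) /\
    c (phi (shift w j T)) - c (phi w) = c (psi (shift w j th)) * T.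
Proof. intros Ca Co Cm Cb Hj H Hseg.
  destruct (Derive.MVT_gen (fun s => c (phi (shift w j s))) 0 T (fun s => c (psi (shift w j s))))
    as [th [Hth Heq]].
  - intros x Hx. apply Derive.is_derive_Reals. apply (deriv_comp c phi psi j w x Ca Co Cm Cb Hj H). apply Hseg; lra.
  - intros x Hx. apply derivable_continuous_pt. econstructor. apply (deriv_comp c phi psi j w x Ca Co Cm Cb Hj H). apply Hseg; lra.
  - exists th. split; auto. rewrite shift_0 in Heq. simpl in Heq. rewrite Heq. f_equal. ring. Qed.

Lemma seg_comp (c : Kt k -> R) phi psi j w T C :
  (forall a b, c (Kadd a b) = c a + c b) -> (forall a, c (Kopp a) = - c a) ->
  (forall r a, c (Kmul (Kinj r) a) = r * c a) -> (forall a, Rabs (c a) <= Kabs a) ->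
  (j < d)%nat -> has_partial K Om j phi psi ->
  (forall t, Rmin 0 T <= t <= Rmax 0 T -> Om (shift w j t) /\ Kabs (psi (shift w j t)) <= C) ->
  Rabs (c (phi (shift w j T)) - c (phi w)) <= C * Rabs T.
Proof. intros Ca Co Cm Cb Hj H Hseg.
  destruct (Derive.MVT_gen (fun s => c (phi (shift w j s))) 0 T (fun s => c (psi (shift w j s))))
    as [th [Hth Heq]].
  - intros x Hx. apply Derive.is_derive_Reals. apply (deriv_comp c phi psi j w x Ca Co Cm Cb Hj H). apply Hseg; lra.
  - intros x Hx. apply derivable_continuous_pt. econstructor. apply (deriv_comp c phi psi j w x Ca Co Cm Cb Hj H). apply Hseg; lra.
  - rewrite shift_0 in Heq. simpl in Heq. rewrite Heq. rewrite Rabs_mult.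
    replace (T - 0) with T by ring. apply Rmult_le_compat_r. apply Rabs_pos.
    eapply Rle_trans. apply Cb. apply Hseg; auto. Qed.

Lemma seg_bound phi psi j w T C : (j < d)%nat -> has_partial K Om j phi psi ->
  (forall t, Rmin 0 T <= t <= Rmax 0 T -> Om (shift w j t) /\ Kabs (psi (shift w j t)) <= C) ->
  Kabs (vsub K (phi (shift w j T)) (phi w)) <= 2 * C * Rabs T.
Proof. intros Hj H Hseg. eapply Rle_trans. apply Kabs_le_re_im.
  unfold vsub; simpl. rewrite Kre_add, Kim_add, Kre_opp, Kim_opp.
  pose proof (seg_comp Kre phi psi j w T C Kre_add Kre_opp Kre_mul_inj Kre_le Hj H Hseg).
  pose proof (seg_comp Kim phi psi j w T C Kim_add Kim_opp Kim_mul_inj Kim_le Hj H Hseg).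
  unfold Rminus in *. lra. Qed.

Definition path (y w : nat -> R) (m : nat) : nat -> R :=
  fun i => if Nat.ltb i m then w i else y i.

Lemma cube_lip phi z r C : (forall y, cube d z r y -> Om y) -> 0 <= C ->
  (forall j, (j < d)%nat -> exists psi, has_partial K Om j phi psi /\
      forall y, cube d z r y -> Kabs (psi y) <= C) ->
  forall y w, cube d z r y -> cube d z r w ->
    Kabs (vsub K (phi w) (phi y)) <= 2 * C * INR d * dist d y w.
Proof. intros HQ HC Hp y w Hy Hw.
  assert (Hpm : forall m, (m <= d)%nat -> cube d z r (path y w m)).
  { intros m Hm. split. intros i Hi. unfold path. destruct (Nat.ltb_spec i m). lia. apply Hy; auto.
    intros i Hi. unfold path. destruct (Nat.ltb i m). apply Hw; auto. apply Hy; auto. }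
  assert (Hind : forall m, (m <= d)%nat ->
     Kabs (vsub K (phi (path y w m)) (phi y)) <= 2 * C * INR m * dist d y w).
  { induction m; intros Hm.
    - replace (path y w 0) with y. change (Kabs (vsub K (phi y) (phi y))) with (sn K tt (vsub K (phi y) (phi y))).
      rewrite (vsub_self K HK), (sn_0 K HK). simpl. lra.
      apply functional_extensionality; intro i; unfold path. destruct i; reflexivity.
    - assert (Hm' : (m < d)%nat) by lia.
      assert (Hsh : path y w (S m) = shift (path y w m) m (w m - y m)).
      { apply functional_extensionality; intro i; unfold path, shift.
        destruct (Nat.eqb_spec i m). subst. rewrite Nat.ltb_irrefl.
        replace (Nat.ltb m (S m)) with true by (symmetry; apply Nat.ltb_lt; lia). ring.
        destruct (Nat.ltb_spec i (S m)); destruct (Nat.ltb_spec i m); auto; lia. }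
      eapply Rle_trans. apply Kabs_sub_tri with (b := phi (path y w m)).
      rewrite S_INR. destruct (Hp m Hm') as [psi [Hpsi Hpb]].
      assert (Hseg : Kabs (vsub K (phi (shift (path y w m) m (w m - y m))) (phi (path y w m)))
                 <= 2 * C * Rabs (w m - y m)).
      { apply seg_bound with psi; auto. intros t Ht.
        assert (Hc : cube d z r (shift (path y w m) m t)).
        { split. apply shift_inRd; auto. apply Hpm; lia.
          intros i Hi. unfold shift. destruct (Nat.eqb_spec i m).
          - subst. unfold path. rewrite Nat.ltb_irrefl.
            destruct Hy as [_ Hy]; destruct Hw as [_ Hw]. specialize (Hy m Hi); specialize (Hw m Hi).
            apply abs_le_bt in Hy; apply abs_le_bt in Hw. apply Rabs_le.
            unfold Rmin, Rmax in Ht. destruct (Rle_dec 0 (w m - y m)); lra.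
          - apply (Hpm m); lia. }
        split; auto. }
      rewrite <- Hsh in Hseg. specialize (IHm ltac:(lia)).
      pose proof (coord_le_dist d y w m Hm'). rewrite <- Rabs_Ropp in H.
      replace (- (y m - w m)) with (w m - y m) in H by ring.
      assert (2 * C * Rabs (w m - y m) <= 2 * C * dist d y w) by (apply Rmult_le_compat_l; lra).
      lra. }
  replace w with (path y w d) at 1. apply Hind; auto.
  apply functional_extensionality; intro i; unfold path. destruct (Nat.ltb_spec i d); auto.
  destruct Hy as [Hy _]; destruct Hw as [Hw _]. rewrite Hy, Hw; auto. Qed.

End MVT.

Open Scope R_scope.

Lemma nat_above r : exists n : nat, r < INR n.
Proof. destruct (archimed r) as [H1 H2]. destruct (Z_lt_le_dec (up r) 0).
  - exists 0%nat. simpl. apply IZR_lt in l. lra.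
  - exists (Z.to_nat (up r)). rewrite INR_IZR_INZ, Z2Nat.id; auto. Qed.

Section RP.
Variable g : R.
Hypothesis Hg : 0 < g <= 1.
Lemma rp_pos s : 0 < Rpower s g.
Proof. unfold Rpower. apply exp_pos. Qed.
Lemma rp_mono s t : 0 < s -> s <= t -> Rpower s g <= Rpower t g.
Proof. intros Hs Hst. unfold Rpower. destruct (Rle_lt_or_eq_dec _ _ Hst). 
  left. apply exp_increasing. apply Rmult_lt_compat_l. lra. apply ln_increasing; auto.
  subst; lra. Qed.
Lemma rp_ge s : 0 < s -> s <= 1 -> s <= Rpower s g.
Proof. intros Hs Hs1. unfold Rpower. rewrite <- (exp_ln s) at 1 by auto.
  assert (ln s <= 0). { destruct (Rle_lt_or_eq_dec _ _ Hs1). left. rewrite <- ln_1. apply ln_increasing; auto.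
    subst; rewrite ln_1; lra. }
  destruct (Rle_lt_or_eq_dec _ _ H). 2:{ rewrite e; right; f_equal; ring. }
  destruct (Rle_lt_or_eq_dec _ _ (proj2 Hg)). left. apply exp_increasing. nra.
  subst; right; f_equal; ring. Qed.
Lemma rp_le1 s : 0 < s -> s <= 1 -> Rpower s g <= 1.
Proof. intros Hs Hs1. rewrite <- (Rpower_1 1) by lra. 
  unfold Rpower. rewrite ln_1. replace (1 * 0) with (g * 0) by ring.
  assert (ln s <= 0). { destruct (Rle_lt_or_eq_dec _ _ Hs1). left. rewrite <- ln_1. apply ln_increasing; auto.
    subst; rewrite ln_1; lra. }
  destruct (Rle_lt_or_eq_dec _ _ H). left. apply exp_increasing. nra. rewrite e; right; reflexivity. Qed.
Lemma rp_small eps : 0 < eps -> exists del, 0 < del /\ forall s, 0 < s -> s < del -> Rpower s g < eps.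
Proof. intros He. exists (exp (ln eps / g)). split. apply exp_pos.
  intros s Hs Hsd. unfold Rpower. rewrite <- (exp_ln eps) by auto. apply exp_increasing.
  apply ln_increasing in Hsd; auto. rewrite ln_exp in Hsd.
  apply Rmult_lt_compat_l with (r := g) in Hsd; [|lra]. replace (g * (ln eps / g)) with (ln eps) in Hsd by (field; lra). lra. Qed.
End RP.

Section Weak.
Context {k : Kind} (d : nat) (Om : (nat -> R) -> Prop) (HOm : open_domain d Om).
Let K := Kspace k.
Let HK := Kspace_lcHs k.

Lemma cont_bounded g Kc : cont_on K d Om g -> compact_Rd d Kc -> (forall x, Kc x -> Om x) ->
  exists M, 0 <= M /\ forall x, Kc x -> Kabs (g x) <= M.
Proof. intros Hc [HKin HKc] HKO.
  destruct (HKc nat (fun j y => Om y /\ Kabs (g y) < INR j)) as [l Hl].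
  - intros j y Hy [Hyo Hyj]. destruct HOm as [Hin Hop]. destruct (Hop y Hy Hyo) as [rho [Hr Hb]].
    destruct (Hc y Hyo tt (INR j - Kabs (g y))) as [del [Hd Hdb]]. lra.
    exists (Rmin rho del). split. apply Rmin_glb_lt; auto. intros y' Hy' Hdy.
    assert (Hyo' : Om y') by (apply Hb; auto; eapply Rlt_le_trans;[exact Hdy|apply Rmin_l]).
    split; auto. specialize (Hdb y' Hyo' ltac:(eapply Rlt_le_trans;[exact Hdy|apply Rmin_r])).
    pose proof (sn_le_sub K HK tt (g y') (g y)). simpl sn in *. lra.
  - intros x Hx. destruct (nat_above (Kabs (g x))) as [j Hj]. exists j; auto.
  - destruct (lst_max l (fun j M => INR j <= M)) as [M [HM0 HM]].
    intros j _. exists (INR j); auto.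
    exists M. split; auto. intros x Hx. destruct (Hl x Hx) as [j [Hjl [_ Hj]]].
    specialize (HM j Hjl M (Rle_refl M)). lra. Qed.

Variables (n : nat) (gam : R) (Hgam : 0 < gam <= 1).

Lemma weak_holder phi z r : Ckg_loc K d Om n gam phi ->
  (forall y, cube d z r y -> Om y) -> (forall y w, cube d z r y -> cube d z r w -> dist d y w <= 1) ->
  forall l g, (length l <= n)%nat -> dir_ok d l -> is_deriv K Om l phi g ->
  exists C, 0 <= C /\ forall y w, cube d z r y -> cube d z r w -> 0 < dist d y w ->
    Kabs (vsub K (g y) (g w)) <= C * Rpower (dist d y w) gam.
Proof. intros [Hck Hb] HQ Hdiam l g Hl Hd Hg.
  destruct (Hb (cube d z r) (cube_compact d z r) HQ tt) as [B1 B2].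
  destruct (Nat.eq_dec (length l) n) as [Heq|Hne].
  - destruct (B2 l g Heq Hd Hg) as [M HM]. exists (Rabs M). split. apply Rabs_pos.
    intros y w Hy Hw Hdy. eapply Rle_trans. apply HM; auto. apply Rmult_le_compat_r.
    left; apply rp_pos. apply Rle_abs.
  - destruct (nat_max d (fun j M => exists psi, has_partial K Om j g psi /\
       forall y, cube d z r y -> Kabs (psi y) <= M)) as [M [HM0 HM]].
    + intros j Hj. destruct (Hck (l ++ j :: nil)) as [g' [Hg' _]].
      rewrite length_app; simpl; lia. apply Forall_app; split; auto.
      destruct (isd_app_l K Om l j phi g' Hg') as [h [Hh Hhp]].
      destruct (B1 (l ++ j :: nil) g') as [Mj HMj]. rewrite length_app; simpl; lia.
      apply Forall_app; split; auto. exact Hg'.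
      exists Mj. intros M' HM'. exists g'. split.
      apply hp_ext_f with h; auto. intros x Hx. apply (isd_unique K HK d Om HOm l phi); auto.
      intros y Hy. eapply Rle_trans. apply HMj; auto. auto.
    + exists (2 * M * INR d). split. pose proof (pos_INR d). nra.
      intros y w Hy Hw Hdy. change (Kabs (vsub K (g y) (g w))) with (sn K tt (vsub K (g y) (g w))).
      rewrite (sn_sub_sym K HK tt). change (sn K tt) with (@Kabs k).
      eapply Rle_trans. apply (cube_lip d Om HOm g z r M HQ HM0); auto.
      intros j Hj. apply HM; auto. lra.
      pose proof (pos_INR d). apply Rmult_le_compat_l. nra. apply rp_ge; auto. Qed.

End Weak.

Open Scope R_scope.

Section Mackey.
Context {k : Kind} (E : LCS k) (HE : lcHs E) (HLC : locally_complete E).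

Lemma mackey (Mf : idx E -> R) (u : nat -> E) (om : nat -> nat -> R) :
  (forall m p, 0 < om m p <= 1) ->
  (forall a m p, sn E a (vsub E (u m) (u p)) <= om m p * Mf a) ->
  (forall eps, 0 < eps -> exists N, forall m p, (N <= m)%nat -> (N <= p)%nat -> om m p < eps) ->
  exists L, forall a eps, 0 < eps -> exists N, forall m, (N <= m)%nat -> sn E a (vsub E (u m) L) < eps.
Proof. intros Hom Hb Hc.
  assert (HM0 : forall a, 0 <= Mf a).
  { intro a. pose proof (Hb a 0%nat 0%nat). pose proof (sn_pos E HE a (vsub E (u 0%nat) (u 0%nat))).
    specialize (Hom 0%nat 0%nat). nra. }
  set (D := fun y : E => forall a, sn E a y <= Mf a).
  assert (Hin : forall t y, 0 < t -> (forall a, sn E a y <= t * Mf a) -> in_mult E D t y).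
  { intros t y Ht Hy. exists (vscal E (Kinj (/ t)) y). split.
    - intro a. rewrite (sn_scal_inj E HE). rewrite Rabs_right by (left; apply Rinv_0_lt_compat; auto).
      specialize (Hy a). apply Rmult_le_compat_l with (r := / t) in Hy; [|left; apply Rinv_0_lt_compat; auto].
      rewrite <- Rmult_assoc, Rinv_l in Hy by lra. lra.
    - rewrite (s_inv_cancel E HE) by lra. reflexivity. }
  assert (HD : gauge_Banach E D).
  { apply HLC.
    - intros x Hx a. destruct (Rle_or_lt (sn E a x) (Mf a)) as [|Hlt]; auto.
      destruct (Hx a (sn E a x - Mf a)) as [y [Hy Hxy]]. lra.
      pose proof (sn_le_sub E HE a x y). specialize (Hy a). lra.
    - intro a. exists (Mf a). intros x Hx. apply Hx.
    - intros x y c1 c2 Hx Hy Hcc a. eapply Rle_trans. apply (sn_tri E HE).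
      rewrite !(sn_scal E HE). specialize (Hx a); specialize (Hy a).
      pose proof (Kabs_pos c1); pose proof (Kabs_pos c2). pose proof (HM0 a). nra. }
  set (v := fun m => vsub E (u m) (u 0%nat)).
  destruct (HD v) as [L0 [_ HL0]].
  - intro m. exists 1%nat. simpl. apply Hin. lra. intro a. unfold v. rewrite Rmult_1_l.
    eapply Rle_trans. apply Hb. specialize (Hom m 0%nat). pose proof (HM0 a). nra.
  - intros eps He. destruct (Hc eps He) as [N HN]. exists N. intros m p Hm Hp.
    exists (om m p). split. apply Hom. split. apply HN; auto. apply Hin. apply Hom.
    intro a. unfold v. rewrite (vsub_vsub E HE). apply Hb.
  - exists (vadd E (u 0%nat) L0). intros a eps He.
    destruct (HL0 (eps / (Mf a + 1))) as [N HN]. apply Rdiv_lt_0_compat; auto. specialize (HM0 a); lra.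
    exists N. intros m Hm. destruct (HN m Hm) as [t [Ht [Hte [y [Hy Hyeq]]]]].
    rewrite (vsub_addr E HE). fold (v m). rewrite Hyeq, (sn_scal_inj E HE).
    rewrite Rabs_right by lra. specialize (Hy a). pose proof (HM0 a).
    apply Rlt_le_trans with (eps / (Mf a + 1) * (Mf a + 1)).
    pose proof (sn_pos E HE a y). nra. right. field. lra.
Qed.
End Mackey.

Open Scope R_scope.

Lemma dist_shift2 d x i t t' : (i < d)%nat -> dist d (shift x i t) (shift x i t') = Rabs (t' - t).
Proof. intro H. replace (shift x i t') with (shift (shift x i t) i (t' - t)).
  apply dist_shift; auto. rewrite shift_shift. f_equal. ring. Qed.

Lemma hs_facts r (Hr : 0 < r) m : 0 < r / (INR m + 1) /\ r / (INR m + 1) <= r.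
Proof. pose proof (pos_INR m). split. apply Rdiv_lt_0_compat; lra.
  unfold Rdiv. rewrite <- (Rmult_1_r r) at 2. apply Rmult_le_compat_l. lra.
  rewrite <- Rinv_1. apply Rinv_le_contravar; lra. Qed.
Lemma hs_mono r (Hr : 0 < r) m N : (N <= m)%nat -> r / (INR m + 1) <= r / (INR N + 1).
Proof. intro H. apply le_INR in H. pose proof (pos_INR N). unfold Rdiv.
  apply Rmult_le_compat_l. lra. apply Rinv_le_contravar; lra. Qed.

Lemma between_abs t T : Rmin 0 T <= t <= Rmax 0 T -> Rabs t <= Rabs T.
Proof. unfold Rmin, Rmax. intros H. destruct (Rle_dec 0 T).
  rewrite (Rabs_right T) by lra. apply Rabs_le; lra.
  rewrite (Rabs_left T) by lra. apply Rabs_le; lra. Qed.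

Section Main.
Context {k : Kind} (E : LCS k) (HE : lcHs E) (HLC : locally_complete E)
  (G : (E -> Kt k) -> Prop) (HG : dual_subspace E G) (HGb : determines_boundedness E G)
  (d : nat) (Om : (nat -> R) -> Prop) (HOm : open_domain d Om) (gam : R) (Hgam : 0 < gam <= 1).
Let K := Kspace k.
Let HK := Kspace_lcHs k.

Lemma Kabs_scal_inj r (a : Kt k) : Kabs (vscal K (Kinj r) a) = Rabs r * Kabs a.
Proof. apply (sn_scal_inj K HK tt). Qed.
Lemma G_dual e : G e -> in_dual E e.
Proof. intro; apply HG; auto. Qed.

Definition DQ {T : LCS k} (phi : (nat -> R) -> T) x i h : T :=
  vscal T (Kinj (/ h)) (vsub T (phi (shift x i h)) (phi x)).

Lemma dq_est (c : Kt k -> R) phi psi x i C0 r :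
  (forall a b, c (Kadd a b) = c a + c b) -> (forall a, c (Kopp a) = - c a) ->
  (forall r a, c (Kmul (Kinj r) a) = r * c a) -> (forall a, Rabs (c a) <= Kabs a) ->
  (i < d)%nat -> has_partial K Om i phi psi -> (forall t, Rabs t <= r -> Om (shift x i t)) ->
  (forall t t', Rabs t <= r -> Rabs t' <= r -> t <> t' ->
     Kabs (vsub K (psi (shift x i t)) (psi (shift x i t'))) <= C0 * Rpower (Rabs (t - t')) gam) ->
  0 <= C0 ->
  forall h h', 0 < Rabs h <= r -> 0 < Rabs h' <= r ->
    Rabs (c (vsub K (DQ phi x i h) (DQ phi x i h'))) <= C0 * Rpower (Rabs h + Rabs h') gam.
Proof. intros Ca Co Cm Cb Hi Hp HOmr Hhol HC0 h h' Hh Hh'.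
  assert (Hc : forall hh, 0 < Rabs hh <= r -> exists th, Rabs th <= Rabs hh /\
            c (DQ phi x i hh) = c (psi (shift x i th))).
  { intros hh Hhh. destruct (mvt_comp d Om HOm c phi psi i x hh Ca Co Cm Cb Hi Hp) as [th [Hth Heq]].
    - intros t Ht. apply HOmr. apply between_abs in Ht. lra.
    - exists th. split. apply between_abs; auto.
      unfold DQ, vsub; simpl vscal; simpl vadd; simpl vopp. rewrite Cm, Ca, Co.
      replace (c (phi (shift x i hh)) + - c (phi x)) with (c (psi (shift x i th)) * hh) by (rewrite <- Heq; ring).
      field. intro; subst; rewrite Rabs_R0 in Hhh; lra. }
  destruct (Hc h Hh) as [th [Hth Heq]]. destruct (Hc h' Hh') as [th' [Hth' Heq']].
  change (c (vsub K (DQ phi x i h) (DQ phi x i h'))) with (c (Kadd (DQ phi x i h) (Kopp (DQ phi x i h')))).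
  rewrite Ca, Co, Heq, Heq'.
  destruct (Req_dec th th') as [<-|Hne].
  - replace (c (psi (shift x i th)) + - c (psi (shift x i th))) with 0 by ring. rewrite Rabs_R0.
    pose proof (rp_pos gam (Rabs h + Rabs h')). nra.
  - eapply Rle_trans. 2:{ apply Rmult_le_compat_l. auto. apply (rp_mono gam Hgam (Rabs (th - th'))).
      apply Rabs_pos_lt; lra. eapply Rle_trans. apply Rabs_triang. rewrite Rabs_Ropp. lra. }
    eapply Rle_trans;[|apply Hhol]. eapply Rle_trans;[|apply Cb].
    unfold vsub; simpl; rewrite Ca, Co; right; reflexivity.
    lra. lra. auto. Qed.

Lemma DQ_dual e f x i h : in_dual E e ->
  e (DQ f x i h) = DQ (T := K) (fun y => e (f y)) x i h.
Proof. intro He. unfold DQ. rewrite (dual_scal E e), (dual_sub E HE e); auto. Qed.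

Lemma Kre_sub (a b : Kt k) : Kre (vsub K a b) = Kre a - Kre b.
Proof. unfold vsub; simpl. rewrite Kre_add, Kre_opp. ring. Qed.

Lemma deriv_exists n f i : (forall e, G e -> Ckg_loc K d Om (S n) gam (fun x => e (f x))) ->
  (i < d)%nat -> exists F, has_partial E Om i f F.
Proof. intros Hw Hi.
  assert (Hpt : forall x, exists L, Om x -> forall a eps, 0 < eps -> exists del, 0 < del /\
      forall h, h <> 0 -> Rabs h < del -> Om (shift x i h) ->
        sn E a (vsub E (DQ f x i h) L) < eps).
  2:{ destruct (functional_choice _ Hpt) as [F HF]. exists F. intros x Hx a eps He.
      destruct (HF x Hx a eps He) as [del [Hd Hb]]. exists del; split; auto. }
  intro x. destruct (classic (Om x)) as [Hx|Hx]. 2:{ exists (vzero E). intro; contradiction. }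
  assert (Hxin : inRd d x) by (apply HOm; auto).
  destruct (cube_small d Om x (1/2) HOm Hx) as [r [Hr0 [Hr1 [HQ Hdiam]]]]. lra.
  assert (Hseg : forall t, Rabs t <= r -> cube d x r (shift x i t)).
  { intros t Ht. split. apply shift_inRd; auto. intros j Hj. unfold shift.
    destruct (Nat.eqb j i). replace (x j + t - x j) with t by ring. auto.
    replace (x j - x j) with 0 by ring. rewrite Rabs_R0. lra. }
  assert (Hweak : forall e, G e -> exists C, 0 <= C /\ forall h h', 0 < Rabs h <= r -> 0 < Rabs h' <= r ->
      Kabs (vsub K (e (DQ f x i h)) (e (DQ f x i h'))) <= C * Rpower (Rabs h + Rabs h') gam).
  { intros e He. pose proof (G_dual e He) as Hd. specialize (Hw e He) as Hck.
    destruct (proj1 Hck (i :: nil)) as [g [[psi [Hpsi _]] _]]. simpl; lia. constructor; auto.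
    assert (Hl1 : (length (i::nil) <= S n)%nat) by (simpl; lia).
    assert (Hd1 : dir_ok d (i::nil)) by (constructor; auto).
    assert (Hid : is_deriv K Om (i::nil) (fun y => e (f y)) psi) by (exists psi; split; [auto| simpl; auto]).
    destruct (weak_holder d Om HOm (S n) gam Hgam (fun y => e (f y)) x r Hck HQ Hdiam (i :: nil) psi Hl1 Hd1 Hid)
      as [C0 [HC0 Hhol]].
    assert (Hhol' : forall t t', Rabs t <= r -> Rabs t' <= r -> t <> t' ->
      Kabs (vsub K (psi (shift x i t)) (psi (shift x i t'))) <= C0 * Rpower (Rabs (t - t')) gam).
    { intros t t' Ht Ht' Hne. rewrite Rabs_minus_sym. rewrite <- (dist_shift2 d x i t t') by auto.
      apply Hhol; auto. rewrite dist_shift2 by auto. apply Rabs_pos_lt. lra. }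
    exists (2 * C0). split. lra. intros h h' Hh Hh'. rewrite !DQ_dual by auto.
    eapply Rle_trans. apply Kabs_le_re_im.
    pose proof (dq_est Kre (fun y => e (f y)) psi x i C0 r Kre_add Kre_opp Kre_mul_inj Kre_le Hi Hpsi
      (fun t Ht => HQ _ (Hseg t Ht)) Hhol' HC0 h h' Hh Hh').
    pose proof (dq_est Kim (fun y => e (f y)) psi x i C0 r Kim_add Kim_opp Kim_mul_inj Kim_le Hi Hpsi
      (fun t Ht => HQ _ (Hseg t Ht)) Hhol' HC0 h h' Hh Hh'). lra. }
  set (om := fun h h' => Rpower (Rabs h + Rabs h') gam).
  set (B := fun v => exists h h', 0 < Rabs h <= r /\ 0 < Rabs h' <= r /\
       v = vscal E (Kinj (/ om h h')) (vsub E (DQ f x i h) (DQ f x i h'))).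
  assert (HB : bounded E B).
  { apply HGb. intros e He. destruct (Hweak e He) as [C [HC HCb]]. exists C.
    intros v [h [h' [Hh [Hh' ->]]]]. pose proof (G_dual e He) as Hd.
    rewrite (dual_scal E e), (dual_sub E HE e) by auto. rewrite Kabs_scal_inj.
    pose proof (rp_pos gam (Rabs h + Rabs h')) as Hp. fold (om h h') in Hp.
    rewrite Rabs_right by (left; apply Rinv_0_lt_compat; auto).
    specialize (HCb h h' Hh Hh'). fold (om h h') in HCb.
    apply Rmult_le_compat_l with (r := / om h h') in HCb; [|left; apply Rinv_0_lt_compat; auto].
    replace (/ om h h' * (C * om h h')) with C in HCb by (field; lra). auto. }
  destruct (functional_choice _ HB) as [Mf HMf].
  assert (Hpair : forall a h h', 0 < Rabs h <= r -> 0 < Rabs h' <= r ->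
     sn E a (vsub E (DQ f x i h) (DQ f x i h')) <= om h h' * Mf a).
  { intros a h h' Hh Hh'. pose proof (rp_pos gam (Rabs h + Rabs h')) as Hp. fold (om h h') in Hp.
    rewrite <- (s_inv_cancel E HE (om h h') (vsub E (DQ f x i h) (DQ f x i h'))) by lra. rewrite (sn_scal_inj E HE).
    rewrite Rabs_right by lra. apply Rmult_le_compat_l. lra. apply HMf.
    exists h, h'. auto. }
  set (hs := fun m : nat => r / (INR m + 1)).
  assert (Hhs : forall m, 0 < Rabs (hs m) <= r).
  { intro m. destruct (hs_facts r Hr0 m). unfold hs. rewrite Rabs_right by lra. lra. }
  destruct (mackey E HE HLC Mf (fun m => DQ f x i (hs m)) (fun m p => om (hs m) (hs p))) as [L HL].
  - intros m p. split. apply rp_pos. apply rp_le1; auto.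
    pose proof (Hhs m); pose proof (Hhs p); lra. pose proof (Hhs m); pose proof (Hhs p); lra.
  - intros a m p. apply Hpair; auto.
  - intros eps He. destruct (rp_small gam Hgam eps He) as [del [Hd Hdb]].
    destruct (nat_above (2 * r / del)) as [N HN]. exists N. intros m p Hm Hp.
    apply Hdb. pose proof (Hhs m); pose proof (Hhs p); lra.
    pose proof (hs_facts r Hr0 m); pose proof (hs_facts r Hr0 p).
    pose proof (hs_mono r Hr0 m N Hm); pose proof (hs_mono r Hr0 p N Hp).
    unfold hs in *. rewrite !Rabs_right by lra.
    assert (r / (INR N + 1) < del / 2).
    { pose proof (pos_INR N). apply Rmult_lt_compat_r with (r := del) in HN; auto.
      unfold Rdiv in HN. rewrite Rmult_assoc, Rinv_l, Rmult_1_r in HN by lra.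
      apply Rmult_lt_reg_r with (r := 2 * (INR N + 1)). lra.
      replace (r / (INR N + 1) * (2 * (INR N + 1))) with (2 * r) by (field; lra). nra. }
    lra.
  - exists L. intros _ a eps He.
    set (eps' := eps / (2 * (Rabs (Mf a) + 1))).
    assert (He' : 0 < eps') by (unfold eps'; apply Rdiv_lt_0_compat; [lra|pose proof (Rabs_pos (Mf a)); lra]).
    destruct (rp_small gam Hgam eps' He') as [d1 [Hd1 Hd1b]].
    destruct (HL a (eps / 2)) as [N HN]. lra.
    destruct (nat_above (2 * r / d1)) as [N2 HN2].
    exists (Rmin r (d1 / 2)). split. apply Rmin_glb_lt; lra.
    intros h Hh Hhd HOmh.
    assert (Hhr : Rabs h <= r) by (left; eapply Rlt_le_trans;[exact Hhd|apply Rmin_l]).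
    assert (Hhd1 : Rabs h < d1 / 2) by (eapply Rlt_le_trans;[exact Hhd|apply Rmin_r]).
    set (m := Nat.max N N2).
    assert (Hm1 : (N <= m)%nat) by lia. assert (Hm2 : (N2 <= m)%nat) by lia.
    specialize (HN m Hm1).
    assert (Hsm : Rabs (hs m) < d1 / 2).
    { pose proof (hs_facts r Hr0 m). pose proof (hs_mono r Hr0 m N2 Hm2). unfold hs in *.
      rewrite Rabs_right by lra. pose proof (pos_INR N2).
      apply Rmult_lt_compat_r with (r := d1) in HN2; auto.
      unfold Rdiv in HN2. rewrite Rmult_assoc, Rinv_l, Rmult_1_r in HN2 by lra.
      assert (r / (INR N2 + 1) < d1 / 2).
      { apply Rmult_lt_reg_r with (r := 2 * (INR N2 + 1)). lra.
        replace (r / (INR N2 + 1) * (2 * (INR N2 + 1))) with (2 * r) by (field; lra). nra. }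
      lra. }
    eapply Rle_lt_trans. apply (sn_sub_tri E HE a) with (y := DQ f x i (hs m)).
    assert (Hhpos : 0 < Rabs h) by (apply Rabs_pos_lt; auto).
    pose proof (Hpair a h (hs m) (conj Hhpos Hhr) (Hhs m)) as Hp.
    assert (Hom : om h (hs m) < eps').
    { apply Hd1b. pose proof (Hhs m). lra. lra. }
    assert (om h (hs m) * Mf a < eps / 2).
    { pose proof (Rle_abs (Mf a)). pose proof (Rabs_pos (Mf a)).
      pose proof (rp_pos gam (Rabs h + Rabs (hs m))). fold (om h (hs m)) in H1.
      apply Rle_lt_trans with (om h (hs m) * Rabs (Mf a)). apply Rmult_le_compat_l; lra.
      apply Rle_lt_trans with (eps' * Rabs (Mf a)). apply Rmult_le_compat_r; lra.
      unfold eps'. apply Rmult_lt_reg_r with (r := 2 * (Rabs (Mf a) + 1)). lra.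
      replace (eps / (2 * (Rabs (Mf a) + 1)) * Rabs (Mf a) * (2 * (Rabs (Mf a) + 1))) with (eps * Rabs (Mf a)) by (field; lra).
      nra. }
    lra.
Qed.

End Main.

Open Scope R_scope.

Section PartA.
Context {k : Kind} (E : LCS k) (HE : lcHs E) (HLC : locally_complete E)
  (G : (E -> Kt k) -> Prop) (HG : dual_subspace E G) (HGb : determines_boundedness E G)
  (d : nat) (Om : (nat -> R) -> Prop) (HOm : open_domain d Om) (gam : R) (Hgam : 0 < gam <= 1).
Let K := Kspace k.
Let HK := Kspace_lcHs k.

Lemma Kabs_e_scal e r v : in_dual E e -> Kabs (e (vscal E (Kinj r) v)) = Rabs r * Kabs (e v).
Proof. intro He. rewrite (dual_scal E e) by auto. apply (sn_scal_inj K HK tt). Qed.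

Lemma deriv_cont n f l g : (forall e, G e -> Ckg_loc K d Om n gam (fun x => e (f x))) ->
  (length l <= n)%nat -> dir_ok d l -> is_deriv E Om l f g -> cont_on E d Om g.
Proof. intros Hw Hl Hd Hg x Hx a eps He.
  assert (Hxin : inRd d x) by (apply HOm; auto).
  destruct (cube_small d Om x 1 HOm Hx) as [r [Hr0 [Hr1 [HQ Hdiam]]]]. lra.
  assert (Hxc : cube d x r x). { split; auto. intros; replace (x k0 - x k0) with 0 by ring. rewrite Rabs_R0; lra. }
  set (B := fun v => exists y, cube d x r y /\ 0 < dist d x y /\
       v = vscal E (Kinj (/ Rpower (dist d x y) gam)) (vsub E (g y) (g x))).
  assert (HB : bounded E B).
  { apply HGb. intros e He'. pose proof (G_dual E G HG e He') as Hd'.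
    destruct (weak_holder d Om HOm n gam Hgam (fun y => e (f y)) x r (Hw e He') HQ Hdiam l
       (fun y => e (g y)) Hl Hd (isd_transfer E HE Om e l f g Hd' Hg)) as [C [HC HCb]].
    exists C. intros v [y [Hy [Hdy ->]]]. rewrite Kabs_e_scal by auto.
    pose proof (rp_pos gam (dist d x y)) as Hp.
    rewrite Rabs_right by (left; apply Rinv_0_lt_compat; auto).
    rewrite (dual_sub E HE e) by auto. specialize (HCb y x Hy Hxc). rewrite rd_dist_sym in HCb.
    specialize (HCb Hdy).
    apply Rmult_le_compat_l with (r := / Rpower (dist d x y) gam) in HCb; [|left; apply Rinv_0_lt_compat; auto].
    replace (/ Rpower (dist d x y) gam * (C * Rpower (dist d x y) gam)) with C in HCb by (field; lra). auto. }
  destruct (HB a) as [M HM].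
  destruct (rp_small gam Hgam (eps / (Rabs M + 1))) as [d1 [Hd1 Hd1b]].
  apply Rdiv_lt_0_compat; auto. pose proof (Rabs_pos M); lra.
  exists (Rmin d1 r). split. apply Rmin_glb_lt; auto.
  intros y Hy Hdy. assert (Hyin : inRd d y) by (apply HOm; auto).
  destruct (Rle_lt_or_eq_dec 0 (dist d x y) (rd_dist_pos d x y)) as [Hpos|Hz].
  - assert (Hyc : cube d x r y).
    { split; auto. intros j Hj. rewrite Rabs_minus_sym. eapply Rle_trans. apply (coord_le_dist d x y j); auto.
      left; eapply Rlt_le_trans;[exact Hdy|apply Rmin_r]. }
    pose proof (rp_pos gam (dist d x y)) as Hp.
    rewrite <- (s_inv_cancel E HE (Rpower (dist d x y) gam) (vsub E (g y) (g x))) by lra.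
    rewrite (sn_scal_inj E HE), Rabs_right by lra.
    assert (HMv : sn E a (vscal E (Kinj (/ Rpower (dist d x y) gam)) (vsub E (g y) (g x))) <= M).
    { apply HM. exists y; auto. }
    assert (Hom : Rpower (dist d x y) gam < eps / (Rabs M + 1)).
    { apply Hd1b; auto. eapply Rlt_le_trans;[exact Hdy|apply Rmin_l]. }
    pose proof (Rle_abs M). pose proof (Rabs_pos M).
    apply Rle_lt_trans with (Rpower (dist d x y) gam * Rabs M). apply Rmult_le_compat_l; lra.
    apply Rle_lt_trans with (eps / (Rabs M + 1) * Rabs M). apply Rmult_le_compat_r; lra.
    apply Rmult_lt_reg_r with (r := Rabs M + 1). lra.
    replace (eps / (Rabs M + 1) * Rabs M * (Rabs M + 1)) with (eps * Rabs M) by (field; lra). nra.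
  - rewrite (dist0_eq d x y Hxin Hyin (eq_sym Hz)). rewrite (vsub_self E HE), (sn_0 E HE). auto. Qed.

Lemma exists_deriv l : forall n f, (length l <= n)%nat -> dir_ok d l ->
  (forall e, G e -> Ckg_loc K d Om n gam (fun x => e (f x))) -> exists g, is_deriv E Om l f g.
Proof. induction l as [|i l IH]; intros n f Hl Hd Hw.
  - exists f. simpl; auto.
  - destruct n as [|n]. simpl in Hl; lia. inversion Hd; subst.
    destruct (deriv_exists E HE HLC G HG HGb d Om HOm gam Hgam n f i Hw H1) as [F HF].
    destruct (IH n F) as [g Hg]. simpl in Hl; lia. auto.
    intros e He. apply (Ckg_inherit K HK d Om HOm n gam i (fun x => e (f x))); auto.
    apply (hp_transfer E HE Om e i f F); auto. apply (G_dual E G HG); auto.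
    exists g, F. split; auto. Qed.

Lemma part_a n f : (forall e, G e -> Ckg_loc K d Om n gam (fun x => e (f x))) -> Ckg_loc E d Om n gam f.
Proof. intros Hw. split.
  - intros l Hl Hd. destruct (exists_deriv l n f Hl Hd Hw) as [g Hg]. exists g. split; auto.
    apply (deriv_cont n f l g); auto.
  - intros Kc HKc HKO a. split.
    + intros l g Hl Hd Hg.
      assert (HB : bounded E (fun v => exists x, Kc x /\ v = g x)).
      { apply HGb. intros e He. pose proof (G_dual E G HG e He) as Hd'.
        destruct (proj2 (Hw e He) Kc HKc HKO tt) as [B1 _].
        destruct (B1 l (fun x => e (g x)) Hl Hd (isd_transfer E HE Om e l f g Hd' Hg)) as [M HM].
        exists M. intros v [x [Hx ->]]. apply HM; auto. }
      destruct (HB a) as [M HM]. exists M. intros x Hx. apply HM. exists x; auto.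
    + intros l g Hl Hd Hg.
      set (B := fun v => exists x y, Kc x /\ Kc y /\ 0 < dist d x y /\
          v = vscal E (Kinj (/ Rpower (dist d x y) gam)) (vsub E (g x) (g y))).
      assert (HB : bounded E B).
      { apply HGb. intros e He. pose proof (G_dual E G HG e He) as Hd'.
        destruct (proj2 (Hw e He) Kc HKc HKO tt) as [_ B2].
        destruct (B2 l (fun x => e (g x)) Hl Hd (isd_transfer E HE Om e l f g Hd' Hg)) as [M HM].
        exists M. intros v [x [y [Hx [Hy [Hdy ->]]]]]. rewrite Kabs_e_scal by auto.
        pose proof (rp_pos gam (dist d x y)) as Hp.
        rewrite Rabs_right by (left; apply Rinv_0_lt_compat; auto).
        rewrite (dual_sub E HE e) by auto. specialize (HM x y Hx Hy Hdy).
        change (sn K tt) with (@Kabs k) in HM.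
        apply Rmult_le_compat_l with (r := / Rpower (dist d x y) gam) in HM; [|left; apply Rinv_0_lt_compat; auto].
        replace (/ Rpower (dist d x y) gam * (M * Rpower (dist d x y) gam)) with M in HM by (field; lra). auto. }
      destruct (HB a) as [M HM]. exists M. intros x y Hx Hy Hdy.
      pose proof (rp_pos gam (dist d x y)) as Hp.
      rewrite <- (s_inv_cancel E HE (Rpower (dist d x y) gam) (vsub E (g x) (g y))) by lra.
      rewrite (sn_scal_inj E HE), Rabs_right by lra. rewrite Rmult_comm.
      apply Rmult_le_compat_r. lra. apply HM. exists x, y; auto. Qed.

End PartA.

Open Scope R_scope.

Section PartB.
Context {k : Kind} (d : nat) (Om : (nat -> R) -> Prop) (HOm : open_domain d Om).
Let K := Kspace k.
Let HK := Kspace_lcHs k.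

Lemma cont_ext (g1 g2 : (nat -> R) -> K) : cont_on K d Om g1 -> (forall x, Om x -> g1 x = g2 x) ->
  cont_on K d Om g2.
Proof. intros H He x Hx a eps Heps. destruct (H x Hx a eps Heps) as [del [Hd Hb]].
  exists del; split; auto. intros y Hy Hdy. rewrite <- !He by auto. auto. Qed.

Lemma Kabs_sub_le (a b : Kt k) : Kabs (vsub K a b) <= Kabs a + Kabs b.
Proof. pose proof (sn_sub_tri K HK tt a (vzero K) b). rewrite (vsub_0 K HK) in H.
  rewrite (sn_sub_sym K HK tt (vzero K) b), (vsub_0 K HK) in H. exact H. Qed.

Lemma lip_compact (g : (nat -> R) -> K) Kc : cont_on K d Om g ->
  (forall j, (j < d)%nat -> exists psi, has_partial K Om j g psi /\ cont_on K d Om psi) ->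
  compact_Rd d Kc -> (forall x, Kc x -> Om x) ->
  exists M, forall x y, Kc x -> Kc y -> 0 < dist d x y ->
    Kabs (vsub K (g x) (g y)) <= M * dist d x y.
Proof. intros Hgc Hpar HKc HKO.
  assert (Hrho : forall z, exists rho, 0 < rho /\ (Om z -> forall y, cube d z rho y -> Om y)).
  { intro z. destruct (classic (Om z)) as [Hz|Hz].
    - destruct (cube_small d Om z 1 HOm Hz) as [r [Hr [_ [HQ _]]]]. lra. exists r; auto.
    - exists 1. split. lra. intro; contradiction. }
  destruct (functional_choice _ Hrho) as [rf Hrf].
  destruct HKc as [HKin HKcov].
  destruct (HKcov (nat -> R) (fun z y => Kc z /\ inRd d y /\
       forall j, (j < d)%nat -> Rabs (y j - z j) < rf z / 2)) as [Lz HLz].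
  - intros z y Hyin [HKz [_ Hyj]].
    destruct (nat_min d (fun j t => forall y', inRd d y' -> dist d y y' < t -> Rabs (y' j - z j) < rf z / 2))
      as [s [Hs Hsb]].
    + intros j Hj. exists (rf z / 2 - Rabs (y j - z j)). split. specialize (Hyj j Hj); lra.
      intros t Ht Hts y' Hy' Hdy'. pose proof (coord_le_dist d y y' j Hj).
      replace (y' j - z j) with ((y' j - y j) + (y j - z j)) by ring.
      eapply Rle_lt_trans. apply Rabs_triang. rewrite Rabs_minus_sym. lra.
    + exists s. split; auto. intros y' Hy' Hdy'. split; auto. split; auto.
      intros j Hj. apply (Hsb j Hj s Hs (Rle_refl s)); auto.
  - intros x Hx. exists x. split; auto. split. apply HKin; auto. intros j Hj.
    replace (x j - x j) with 0 by ring. rewrite Rabs_R0. destruct (Hrf x). lra.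
  - destruct (lst_max Lz (fun z M => Kc z -> forall y w, cube d z (rf z) y -> cube d z (rf z) w ->
        Kabs (vsub K (g w) (g y)) <= M * dist d y w)) as [Cm [HCm0 HCm]].
    { intros z _. destruct (classic (Kc z)) as [Hz|Hz].
      2:{ exists 0. intros; contradiction. }
      destruct (Hrf z) as [Hr0 HQ]. specialize (HQ (HKO z Hz)).
      destruct (nat_max d (fun j M => exists psi, has_partial K Om j g psi /\
          forall y, cube d z (rf z) y -> Kabs (psi y) <= M)) as [C [HC0 HC]].
      { intros j Hj. destruct (Hpar j Hj) as [psi [Hp Hc]].
        destruct (cont_bounded d Om HOm psi (cube d z (rf z)) Hc (cube_compact d z (rf z)) HQ) as [Mj [_ HMj]].
        exists Mj. intros M' HM'. exists psi. split; auto. intros y Hy. eapply Rle_trans; eauto. }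
      exists (2 * C * INR d). intros M' HM' _ y w Hy Hw.
      eapply Rle_trans. apply (cube_lip d Om HOm g z (rf z) C HQ HC0); auto.
      intros j Hj. apply HC; auto. lra.
      apply Rmult_le_compat_r. apply rd_dist_pos. auto. }
    destruct (lst_min Lz (fun z t => t <= rf z / 2)) as [r0 [Hr0 Hr0b]].
    { intros z _. exists (rf z / 2). destruct (Hrf z). split. lra. intros; auto. }
    destruct (cont_bounded d Om HOm g Kc Hgc (conj HKin HKcov) HKO) as [M0 [HM00 HM0]].
    exists (Cm + 2 * M0 / r0). intros x y Hx Hy Hdxy.
    assert (HM2 : 0 <= 2 * M0 / r0) by (apply Rmult_le_pos; [lra|left; apply Rinv_0_lt_compat; auto]).
    destruct (Rlt_or_le (dist d x y) r0) as [Hlt|Hge].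
    + destruct (HLz x Hx) as [z [Hz [HKz [Hxin Hxz]]]].
      specialize (Hr0b z Hz r0 Hr0 (Rle_refl r0)).
      assert (Hxc : cube d z (rf z) x). { split; auto. intros j Hj. specialize (Hxz j Hj).
        destruct (Hrf z). lra. }
      assert (Hyc : cube d z (rf z) y). { split. apply HKin; auto. intros j Hj.
        specialize (Hxz j Hj). pose proof (coord_le_dist d x y j Hj).
        replace (y j - z j) with ((x j - z j) - (x j - y j)) by ring.
        eapply Rle_trans. apply Rabs_triang. rewrite Rabs_Ropp. lra. }
      pose proof (HCm z Hz Cm (Rle_refl Cm) HKz y x Hyc Hxc). rewrite rd_dist_sym in H.
      pose proof (rd_dist_pos d x y). nra.
    + eapply Rle_trans. apply Kabs_sub_le. pose proof (HM0 x Hx). pose proof (HM0 y Hy).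
      assert (2 * M0 <= 2 * M0 / r0 * dist d x y).
      { unfold Rdiv. replace (2 * M0) with (2 * M0 * / r0 * r0) at 1 by (field; lra).
        apply Rmult_le_compat_l; auto. }
      pose proof (rd_dist_pos d x y). nra.
Qed.

Lemma scalar_b n phi : Ck K d Om (S n) phi -> Ckg_loc K d Om n 1 phi.
Proof. intros Hc. split. apply (Ck_mono K d Om n phi Hc).
  intros Kc HKc HKO a. split.
  - intros l g Hl Hd Hg. destruct (Hc l) as [g' [Hg' Hc']]. lia. auto.
    destruct (cont_bounded d Om HOm g' Kc Hc' HKc HKO) as [M [_ HM]]. exists M. intros x Hx.
    rewrite (isd_unique K HK d Om HOm l phi g g' Hd Hg Hg' x (HKO x Hx)). apply HM; auto.
  - intros l g Hl Hd Hg. destruct (Hc l) as [g' [Hg' Hc']]. lia. auto.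
    assert (Hgc : cont_on K d Om g).
    { apply cont_ext with g'; auto. intros x Hx. symmetry. apply (isd_unique K HK d Om HOm l phi g g'); auto. }
    destruct (lip_compact g Kc Hgc) as [M HM]; auto.
    { intros j Hj. destruct (Hc (l ++ j :: nil)) as [gj [Hgj Hcj]].
      rewrite length_app; simpl; lia. apply Forall_app; split; auto.
      destruct (isd_app_l K Om l j phi gj Hgj) as [h [Hh Hhp]].
      exists gj. split; auto. apply hp_ext_f with h; auto.
      intros x Hx. apply (isd_unique K HK d Om HOm l phi); auto. }
    exists M. intros x y Hx Hy Hdxy. rewrite Rpower_1 by auto. apply HM; auto. Qed.

End PartB.

Theorem mainTheorem11 :
  forall (k : Kind) (E : LCS k),
    lcHs E -> locally_complete E ->
  forall G : (E -> Kt k) -> Prop,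
    dual_subspace E G -> determines_boundedness E G ->
  forall (d : nat) (Om : (nat -> R) -> Prop), open_domain d Om ->
  forall (n : nat) (gam : R), 0 < gam <= 1 ->
    (forall f : (nat -> R) -> E,
       (forall e, G e -> Ckg_loc (Kspace k) d Om n gam (fun x => e (f x))) ->
       Ckg_loc E d Om n gam f) /\
    (forall f : (nat -> R) -> E,
       (forall e, G e -> Ck (Kspace k) d Om (S n) (fun x => e (f x))) ->
       Ckg_loc E d Om n 1 f).
Proof.
  intros k E HE HLC G HG HGb d Om HOm n gam Hgam. split.
  - intros f Hw. apply (part_a E HE HLC G HG HGb d Om HOm gam Hgam n f Hw).
  - intros f Hw. apply (part_a E HE HLC G HG HGb d Om HOm 1 ltac:(lra) n f).
    intros e He. apply scalar_b; auto.
Qed.
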